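(* Let $(b,c)$ be a connected weighted graph over $X$ with $\sum_{x\in X}c(x)<\infty$ and $\sum_{x,y\in X,\ b(x,y)>0}\frac1{b(x,y)}<\infty$. Then $(b,c)$ is canonically compactifiable, the completions $\overline X^d$ and $\overline X^\varrho$ are compact, and the unique continuous map $\iota:\overline X^d\to\overline X^\varrho$ extending the identity on $X$ is a homeomorphism. Moreover, $\overline X^\varrho$ and $K$ are homeomorphic via the unique continuous map $\overline X^\varrho\to K$ extending the embedding $x\mapsto\delta_x$ of $X$ into $K$.
   Context: Let $X$ be a countably infinite set. A weighted graph $(b,c)$ over $X$ consists of a symmetric $b:X\times X\to[0,\infty)$ with $b(x,x)=0$ and $\sum_y b(x,y)<\infty$ for all $x$, and $c:X\to[0,\infty)$. A path is a finite sequence $(x_0,\dots,x_n)$ of pairwise distinct vertices with $b(x_{i-1},x_i)>0$; connected means any two distinct vertices are joined by a path. Let $\widetilde Q(f)=\frac12\sum_{x,y}b(x,y)|f(x)-f(y)|^2+\sum_x c(x)|f(x)|^2$ and $\widetilde D=\{f:\widetilde Q(f)<\infty\}$; the graph is canonically compactifiable if $\widetilde D\subseteq\ell^\infty(X)$. Metrics: $d(x,y)=\inf\{\sum_{i=1}^n1/b(x_{i-1},x_i):(x_0,\dots,x_n)\text{ a path from }x\text{ to }y\}$, and $\varrho(x,y)=\sup\{|f(x)-f(y)|:f\in\widetilde D,\ \widetilde Q(f)\le1\}$; $\overline X^d$, $\overline X^\varrho$ denote the metric completions. For a canonically compactifiable graph, let $\mathcal A$ be the sup-norm closure of $\widetilde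 D$ in $\ell^\infty(X)$, $\mathcal A^+$ the smallest $C^*$-subalgebra of $\ell^\infty(X)$ containing $\mathcal A$ and the constant $1$, and $K$ the set of characters (nonzero multiplicative linear functionals) of $\mathcal A^+$ with the weak-$*$ topology; $X$ embeds in $K$ via $x\mapsto\delta_x$, $\delta_x(f)=f(x)$. *)

(* Defs.v *)
From Stdlib Require Import Reals Lra List Classical ClassicalEpsilon.
Open Scope R_scope.
Set Implicit Arguments.

Definition sup_or_zero (E : R -> Prop) : R :=
  match excluded_middle_informative (exists r, is_lub E r) with
  | left H => proj1_sig (constructive_indefinite_description _ H)
  | right _ => 0
  end.
Definition inf_or_zero (E : R -> Prop) : R := - sup_or_zero (fun t => E (- t)).
Definition lim_or_zero (u : nat -> R) : R :=
  match excluded_middle_informative (exists l, Un_cv u l) with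
  | left H => proj1_sig (constructive_indefinite_description _ H)
  | right _ => 0
  end.

Fixpoint fsum {T : Type} (g : T -> R) (l : list T) : R :=
  match l with nil => 0 | x :: l' => g x + fsum g l' end.
(* sum_{t in T} g t < infinity (g nonnegative): finite partial sums bounded *)
Definition Summable {T : Type} (g : T -> R) : Prop :=
  exists M, forall l : list T, NoDup l -> fsum g l <= M.

Definition CountablyInfinite (X : Type) : Prop :=
  exists e : nat -> X, (forall n m, e n = e m -> n = m) /\ (forall x, exists n, e n = x).

Definition WeightedGraph {X : Type} (b : X -> X -> R) (c : X -> R) : Prop :=
  (forall x y, 0 <= b x y) /\ (forall x y, b x y = b y x) /\ (forall x, b x x = 0) /\
  (forall x, Summable (b x)) /\ (forall x, 0 <= c x).

Fixpoint chain {X : Type} (b : X -> X -> R) (x : X) (q : list X) : Prop :=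
  match q with nil => True | y :: q' => 0 < b x y /\ chain b y q' end.
Definition IsPath {X : Type} (b : X -> X -> R) (x : X) (q : list X) (y : X) : Prop :=
  NoDup (x :: q) /\ chain b x q /\ last (x :: q) x = y.
Definition Connected {X : Type} (b : X -> X -> R) : Prop :=
  forall x y, x <> y -> exists q, IsPath b x q y.

Fixpoint pweight {X : Type} (b : X -> X -> R) (x : X) (q : list X) : R :=
  match q with nil => 0 | y :: q' => / b x y + pweight b y q' end.
Definition dmetric {X : Type} (b : X -> X -> R) (x y : X) : R :=
  inf_or_zero (fun t => exists q, IsPath b x q y /\ t = pweight b x q).

Definition C := (R * R)%type.
Definition C0 : C := (0, 0).
Definition C1 : C := (1, 0).
Definition Cadd (z w : C) : C := (fst z + fst w, snd z + snd w).
Definition Csub (z w : C) : C := (fst z - fst w, snd z - snd w).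
Definition Cmul (z w : C) : C :=
  (fst z * fst w - snd z * snd w, fst z * snd w + snd z * fst w).
Definition Cconj (z : C) : C := (fst z, - snd z).
Definition Cnorm2 (z : C) : R := fst z * fst z + snd z * snd z.
Definition Cnorm (z : C) : R := sqrt (Cnorm2 z).

Definition Qpart {X : Type} (b : X -> X -> R) (c : X -> R) (f : X -> C) (l : list X) : R :=
  / 2 * fsum (fun x => fsum (fun y => b x y * Cnorm2 (Csub (f x) (f y))) l) l
  + fsum (fun x => c x * Cnorm2 (f x)) l.
(* Q~(f) <= M  (Q~ is a sum of nonnegative terms, i.e. the sup of its finite partial sums) *)
Definition Qle {X : Type} (b : X -> X -> R) (c : X -> R) (f : X -> C) (M : R) : Prop :=
  forall l : list X, NoDup l -> Qpart b c f l <= M.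
Definition InD {X : Type} (b : X -> X -> R) (c : X -> R) (f : X -> C) : Prop :=
  exists M, Qle b c f M.

Definition Bounded {X : Type} (f : X -> C) : Prop := exists M, forall x, Cnorm (f x) <= M.
Definition CanonicallyCompactifiable {X : Type} (b : X -> X -> R) (c : X -> R) : Prop :=
  forall f, InD b c f -> Bounded f.

Definition rho {X : Type} (b : X -> X -> R) (c : X -> R) (x y : X) : R :=
  sup_or_zero (fun t => exists f, Qle b c f 1 /\ t = Cnorm (Csub (f x) (f y))).

Definition Cauchy {X : Type} (dist : X -> X -> R) (s : nat -> X) : Prop :=
  forall eps, 0 < eps -> exists N, forall n m, (N <= n)%nat -> (N <= m)%nat -> dist (s n) (s m) < eps.
Definition Compl {X : Type} (dist : X -> X -> R) : Type := { s : nat -> X | Cauchy dist s }.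
Definition cdist {X : Type} (dist : X -> X -> R) (s t : Compl dist) : R :=
  lim_or_zero (fun n => dist (proj1_sig s n) (proj1_sig t n)).
Definition ceq {X : Type} (dist : X -> X -> R) (s t : Compl dist) : Prop := cdist s t = 0.
Definition copen {X : Type} (dist : X -> X -> R) (U : Compl dist -> Prop) : Prop :=
  forall s, U s -> exists eps, 0 < eps /\ forall t, cdist s t < eps -> U t.
(* s represents the image of x in the completion *)
Definition IsPointOf {X : Type} (dist : X -> X -> R) (s : Compl dist) (x : X) : Prop :=
  forall n, proj1_sig s n = x.

Definition Compact {T : Type} (opn : (T -> Prop) -> Prop) : Prop :=
  forall (I : Type) (U : I -> T -> Prop), (forall i, opn (U i)) -> (forall t, exists i, U i t) ->
  exists l : list I, forall t, exists i, In i l /\ U i t.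
Definition Continuous {A B : Type} (oA : (A -> Prop) -> Prop) (oB : (B -> Prop) -> Prop)
  (f : A -> B) : Prop := forall V, oB V -> oA (fun a => V (f a)).
(* homeomorphism, up to the equality relations eqA, eqB of the spaces *)
Definition Homeo {A B : Type} (eqA : A -> A -> Prop) (eqB : B -> B -> Prop)
  (oA : (A -> Prop) -> Prop) (oB : (B -> Prop) -> Prop) (f : A -> B) : Prop :=
  Continuous oA oB f /\
  exists g : B -> A, Continuous oB oA g /\ (forall a, eqA (g (f a)) a) /\ (forall b, eqB (f (g b)) b).

Definition InA {X : Type} (b : X -> X -> R) (c : X -> R) (u : X -> C) : Prop :=
  forall eps, 0 < eps -> exists f, InD b c f /\ Bounded f /\ forall x, Cnorm (Csub (u x) (f x)) <= eps.

Definition CstarSub {X : Type} (S : (X -> C) -> Prop) : Prop :=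
  (forall u, S u -> Bounded u) /\
  S (fun _ => C0) /\
  (forall u v, S u -> S v -> S (fun x => Cadd (u x) (v x))) /\
  (forall (z : C) u, S u -> S (fun x => Cmul z (u x))) /\
  (forall u v, S u -> S v -> S (fun x => Cmul (u x) (v x))) /\
  (forall u, S u -> S (fun x => Cconj (u x))) /\
  (forall u, (forall eps, 0 < eps -> exists v, S v /\ forall x, Cnorm (Csub (u x) (v x)) <= eps) -> S u).

(* smallest C*-subalgebra of l^infty(X) containing A and 1 *)
Definition InAplus {X : Type} (b : X -> X -> R) (c : X -> R) (u : X -> C) : Prop :=
  forall S, CstarSub S -> (forall f, InA b c f -> S f) -> S (fun _ => C1) -> S u.

Definition IsCharacter {X : Type} (b : X -> X -> R) (c : X -> R) (phi : (X -> C) -> C) : Prop :=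
  (forall u v, InAplus b c u -> InAplus b c v -> phi (fun x => Cadd (u x) (v x)) = Cadd (phi u) (phi v)) /\
  (forall (z : C) u, InAplus b c u -> phi (fun x => Cmul z (u x)) = Cmul z (phi u)) /\
  (forall u v, InAplus b c u -> InAplus b c v -> phi (fun x => Cmul (u x) (v x)) = Cmul (phi u) (phi v)) /\
  (exists u, InAplus b c u /\ phi u <> C0).

(* characters are functionals on A^+; values outside A^+ are irrelevant *)
Definition Kspace {X : Type} (b : X -> X -> R) (c : X -> R) : Type :=
  { phi : (X -> C) -> C | IsCharacter b c phi }.
Definition Keq {X : Type} (b : X -> X -> R) (c : X -> R) (p q : Kspace b c) : Prop :=
  forall u, InAplus b c u -> proj1_sig p u = proj1_sig q u.
Definition Kopen {X : Type} (b : X -> X -> R) (c : X -> R) (U : Kspace b c -> Prop) : Prop :=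
  forall p, U p -> exists (l : list (X -> C)) eps, 0 < eps /\ (forall a, In a l -> InAplus b c a) /\
    forall q : Kspace b c, (forall a, In a l -> Cnorm (Csub (proj1_sig q a) (proj1_sig p a)) < eps) -> U q.

Definition invb {X : Type} (b : X -> X -> R) (p : X * X) : R :=
  match Rlt_dec 0 (b (fst p) (snd p)) with left _ => / b (fst p) (snd p) | right _ => 0 end.

Arguments copen {X} dist U.
Arguments ceq {X} dist s t.
Arguments cdist {X} dist s t.
Arguments IsPointOf {X} dist s x.
Arguments Keq {X} b c p q.
Arguments Kopen {X} b c U.

(* Main.v *)
Require Import Defs.
From Stdlib Require Import Reals List.
From Stdlib Require Import Reals Lra Lia List Classical ClassicalEpsilon FunctionalExtensionality.
Require Import Defs.
Open Scope R_scope.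
Set Default Proof Using "All".

Lemma fsum_app {T} (g:T->R) l1 l2 : fsum g (l1++l2) = fsum g l1 + fsum g l2.
Proof. induction l1; simpl; [lra|rewrite IHl1; lra]. Qed.
Lemma fsum_nonneg {T} (g:T->R) l : (forall x, 0 <= g x) -> 0 <= fsum g l.
Proof. intros H; induction l; simpl; [lra| specialize (H a); lra]. Qed.
Lemma fsum_plus {T} (f g:T->R) l : fsum (fun x => f x + g x) l = fsum f l + fsum g l.
Proof. induction l; simpl; [lra|rewrite IHl; lra]. Qed.
Lemma fsum_scal {T} (f:T->R) k l : fsum (fun x => k * f x) l = k * fsum f l.
Proof. induction l; simpl; [lra|rewrite IHl; lra]. Qed.
Lemma fsum_ext {T} (f g:T->R) l : (forall x, In x l -> f x = g x) -> fsum f l = fsum g l.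
Proof. induction l; simpl; intros H; [lra|]. rewrite H, IHl; auto. Qed.
Lemma fsum_le {T} (f g:T->R) l : (forall x, In x l -> f x <= g x) -> fsum f l <= fsum g l.
Proof. induction l; simpl; intros H; [lra|]. pose proof (H a (or_introl eq_refl)).
  pose proof (IHl (fun x h => H x (or_intror h))). lra. Qed.
Lemma fsum_in_le {T} (g:T->R) l a : (forall x, 0 <= g x) -> In a l -> g a <= fsum g l.
Proof. intros H; induction l; simpl; [tauto|]. intros [->|h].
  - pose proof (fsum_nonneg g l H); lra.
  - pose proof (H a0); pose proof (IHl h); lra. Qed.
Lemma fsum_map {T U} (f:U->T) (g:T->R) l : fsum g (map f l) = fsum (fun x => g (f x)) l.
Proof. induction l; simpl; [lra|rewrite IHl; lra]. Qed.
Lemma fsum_prod {T U} (g: T->U->R) l1 l2 :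
  fsum (fun x => fsum (g x) l2) l1 = fsum (fun p => g (fst p) (snd p)) (list_prod l1 l2).
Proof. induction l1; simpl; [lra|]. rewrite fsum_app, fsum_map, IHl1. reflexivity. Qed.
Lemma NoDup_map_inj {T U} (f:T->U) l : (forall a b, f a = f b -> a = b) -> NoDup l -> NoDup (map f l).
Proof. intros hf h; induction h; simpl; constructor; auto.
  intros hin; apply in_map_iff in hin; destruct hin as [y [hy hy2]]. apply hf in hy; subst; auto. Qed.
Lemma NoDup_prod {T U} (l1:list T) (l2:list U) : NoDup l1 -> NoDup l2 -> NoDup (list_prod l1 l2).
Proof. intros H1 H2; induction H1; simpl; [constructor|].
  apply NoDup_app; auto.
  - apply NoDup_map_inj; auto. intros a0 b0 h; inversion h; reflexivity.
  - intros [p q] h1 h2. apply in_map_iff in h1. destruct h1 as [z [hz _]]. inversion hz; subst.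
    apply in_prod_iff in h2. tauto. Qed.

Lemma summable_nonneg_bound {T} (g:T->R) : Summable g -> exists M, 0 <= M /\ forall l, NoDup l -> fsum g l <= M.
Proof. intros [M HM]. exists M; split; auto. apply (HM nil); constructor. Qed.

Lemma sup_spec (E:R->Prop) : (exists x, E x) -> bound E -> is_lub E (sup_or_zero E).
Proof. intros h1 h2. unfold sup_or_zero. destruct excluded_middle_informative as [e|n].
  - exact (proj2_sig (constructive_indefinite_description _ e)).
  - exfalso; apply n. destruct (completeness E h2 h1) as [m hm]; eauto. Qed.
Lemma sup_ub (E:R->Prop) e : E e -> (exists B, forall t, E t -> t <= B) -> e <= sup_or_zero E.
Proof. intros h [B hB]. destruct (sup_spec E) as [h1 _]; eauto. exists B; intros t ht; auto. Qed.
Lemma sup_le (E:R->Prop) B : (exists e, E e) -> (forall t, E t -> t <= B) -> sup_or_zero E <= B.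
Proof. intros h hB. destruct (sup_spec E) as [_ h2]; auto. exists B; intros t ht; auto. Qed.
Lemma inf_le (E:R->Prop) e B : E e -> (forall t, E t -> B <= t) -> inf_or_zero E <= e.
Proof. intros h hB. unfold inf_or_zero. cut (-e <= sup_or_zero (fun t => E (-t))); [lra|].
  apply sup_ub. rewrite Ropp_involutive; auto. exists (-B). intros t ht. specialize (hB _ ht); lra. Qed.
Lemma le_inf (E:R->Prop) B : (exists e, E e) -> (forall t, E t -> B <= t) -> B <= inf_or_zero E.
Proof. intros [e h] hB. unfold inf_or_zero. cut (sup_or_zero (fun t => E (-t)) <= -B); [lra|].
  apply sup_le. exists (-e); rewrite Ropp_involutive; auto. intros t ht. specialize (hB _ ht); lra. Qed.

Lemma lim_eq u l : Un_cv u l -> lim_or_zero u = l.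
Proof. intros h. unfold lim_or_zero. destruct excluded_middle_informative as [e|n].
  - apply (UL_sequence u); auto. exact (proj2_sig (constructive_indefinite_description _ e)).
  - exfalso; eauto. Qed.
Lemma cv_const a : Un_cv (fun _ => a) a.
Proof. intros e he; exists 0%nat; intros; unfold R_dist; rewrite Rminus_diag, Rabs_R0; lra. Qed.
Lemma cv_le_ev u l e : Un_cv u l -> (exists N, forall n, (N<=n)%nat -> u n <= e) -> l <= e.
Proof. intros h [N hN]. apply Rnot_lt_le; intros hl.
  destruct (h (l - e)) as [N2 hN2]; [lra|]. specialize (hN2 (max N N2) (Nat.le_max_r _ _)).
  specialize (hN (max N N2) (Nat.le_max_l _ _)). unfold R_dist in hN2.
  apply Rabs_def2 in hN2. lra. Qed.
Lemma cv_ge_ev u l e : Un_cv u l -> (exists N, forall n, (N<=n)%nat -> e <= u n) -> e <= l.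
Proof. intros h [N hN]. apply Rnot_lt_le; intros hl.
  destruct (h (e - l)) as [N2 hN2]; [lra|]. specialize (hN2 (max N N2) (Nat.le_max_r _ _)).
  specialize (hN (max N N2) (Nat.le_max_l _ _)). unfold R_dist in hN2.
  apply Rabs_def2 in hN2. lra. Qed.
Lemma cv_lip u l (F:R->R) : Un_cv u l -> (forall a b, Rabs (F a - F b) <= Rabs (a-b)) ->
  Un_cv (fun n => F (u n)) (F l).
Proof. intros h hF e he. destruct (h e he) as [N hN]. exists N; intros n hn.
  unfold R_dist in *. specialize (hN n hn). specialize (hF (u n) l). lra. Qed.
Lemma cv_opp u l : Un_cv u l -> Un_cv (fun n => - u n) (- l).
Proof. intros h. apply (cv_lip u l (fun x => -x)); auto. intros a b.
  replace (-a - -b) with (-(a-b)) by ring. rewrite Rabs_Ropp; lra. Qed.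
Lemma cv_minus u v l m : Un_cv u l -> Un_cv v m -> Un_cv (fun n => u n - v n) (l - m).
Proof. intros h1 h2. apply CV_plus; auto. apply cv_opp; auto. Qed.
Lemma cv_ext u v l : (forall n, u n = v n) -> Un_cv u l -> Un_cv v l.
Proof. intros h h2 e he. destruct (h2 e he) as [N hN]; exists N; intros n hn; rewrite <- h; auto. Qed.
Lemma cv_ext_ev u v l : (exists N, forall n, (N<=n)%nat -> u n = v n) -> Un_cv u l -> Un_cv v l.
Proof. intros [N0 h] h2 e he. destruct (h2 e he) as [N hN]; exists (max N0 N); intros n hn.
  rewrite <- h; [apply hN|]; lia. Qed.
Lemma cv_zero_le u l : Un_cv u l -> (forall n, 0 <= u n) -> 0 <= l.
Proof. intros h h0. apply (cv_ge_ev u); auto. exists 0%nat; auto. Qed.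
Lemma cv_le_cv u v l m : Un_cv u l -> Un_cv v m -> (forall n, u n <= v n) -> l <= m.
Proof. intros hu hv h. assert (h2: Un_cv (fun n => v n - u n) (m - l)) by (apply cv_minus; auto).
  pose proof (cv_zero_le _ _ h2 ltac:(intros n; specialize (h n); lra)). lra. Qed.

Lemma Rsmall_eq0 a : 0 <= a -> (forall e, 0 < e -> a <= e) -> a = 0.
Proof. intros h1 h2. destruct (Rle_lt_or_eq_dec 0 a h1) as [h|h]; auto.
  specialize (h2 (a/2)); lra. Qed.

Lemma sq_nonneg x : 0 <= x * x.
Proof. exact (Rle_0_sqr x). Qed.
Lemma Cnorm2_nonneg z : 0 <= Cnorm2 z.
Proof. destruct z; unfold Cnorm2; simpl; nra. Qed.
Lemma Cnorm_nonneg z : 0 <= Cnorm z.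
Proof. apply sqrt_pos. Qed.
Lemma Cnorm_sq z : Cnorm z * Cnorm z = Cnorm2 z.
Proof. apply sqrt_sqrt, Cnorm2_nonneg. Qed.
Lemma sqrt_le_of x y : 0 <= y -> x <= y * y -> sqrt x <= y.
Proof. intros h1 h2. rewrite <- (sqrt_square y h1). apply sqrt_le_1_alt; auto. Qed.
Lemma sqrt_lt_of x y : 0 <= x -> 0 <= y -> x < y * y -> sqrt x < y.
Proof. intros h0 h1 h2. rewrite <- (sqrt_square y h1). apply sqrt_lt_1; auto; nra. Qed.
Lemma le_sqrt_of x y : 0 <= y -> y * y <= x -> y <= sqrt x.
Proof. intros h1 h2. rewrite <- (sqrt_square y h1). apply sqrt_le_1_alt; auto. Qed.
Lemma Cnorm_le_iff z e : 0 <= e -> Cnorm2 z <= e * e -> Cnorm z <= e.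
Proof. intros; apply sqrt_le_of; auto. Qed.
Lemma Cnorm_ge_sq z e : 0 <= e -> Cnorm z <= e -> Cnorm2 z <= e * e.
Proof. intros h1 h2. rewrite <- Cnorm_sq. pose proof (Cnorm_nonneg z). nra. Qed.
Lemma two_sqrt_le t P Q : 0 <= t -> 0 <= P -> 0 <= Q -> t * t <= P * Q -> 2 * t <= P + Q.
Proof. intros. destruct (Rle_lt_dec (2*t) (P+Q)); auto.
  pose proof (Rle_0_sqr (P-Q)) as hsq; unfold Rsqr in hsq. assert (0 < (2*t - (P+Q)) * (2*t + (P+Q))) by (apply Rmult_lt_0_compat; lra). nra. Qed.
Lemma Cnorm_add z w : Cnorm (Cadd z w) <= Cnorm z + Cnorm w.
Proof. apply sqrt_le_of. pose proof (Cnorm_nonneg z); pose proof (Cnorm_nonneg w); lra.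
  destruct z as [a1 a2], w as [b1 b2]. unfold Cnorm, Cnorm2, Cadd; simpl.
  set (P := a1*a1+a2*a2). set (Q := b1*b1+b2*b2).
  assert (hP: 0 <= P) by (unfold P; nra). assert (hQ: 0 <= Q) by (unfold Q; nra).
  assert (h: a1*b1+a2*b2 <= sqrt P * sqrt Q).
  { rewrite <- sqrt_mult; auto. apply Rle_trans with (Rabs (a1*b1+a2*b2)); [apply Rle_abs|].
    apply le_sqrt_of; [apply Rabs_pos|]. rewrite <- Rabs_mult.
    rewrite Rabs_right; [|apply Rle_ge, sq_nonneg].
    assert (e: (a1*a1+a2*a2)*(b1*b1+b2*b2) = (a1*b1+a2*b2)*(a1*b1+a2*b2) + (a1*b2-a2*b1)*(a1*b2-a2*b1)) by ring.
    pose proof (sq_nonneg (a1*b2-a2*b1)). unfold P, Q; lra. }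
  assert (sqrt P * sqrt P = P) by (apply sqrt_sqrt; auto).
  assert (sqrt Q * sqrt Q = Q) by (apply sqrt_sqrt; auto). unfold P, Q in *. nra. Qed.
Lemma Csub_split a b c : Csub a c = Cadd (Csub a b) (Csub b c).
Proof. destruct a, b, c; unfold Csub, Cadd; simpl; f_equal; ring. Qed.
Lemma Cnorm_tri a b c : Cnorm (Csub a c) <= Cnorm (Csub a b) + Cnorm (Csub b c).
Proof. rewrite (Csub_split a b c). apply Cnorm_add. Qed.
Lemma Cnorm2_sym a b : Cnorm2 (Csub a b) = Cnorm2 (Csub b a).
Proof. destruct a, b; unfold Cnorm2, Csub; simpl; ring. Qed.
Lemma Cnorm_sym a b : Cnorm (Csub a b) = Cnorm (Csub b a).
Proof. unfold Cnorm; rewrite Cnorm2_sym; auto. Qed.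
Lemma Cnorm2_mul z w : Cnorm2 (Cmul z w) = Cnorm2 z * Cnorm2 w.
Proof. destruct z, w; unfold Cnorm2, Cmul; simpl; ring. Qed.
Lemma Cnorm_mul z w : Cnorm (Cmul z w) = Cnorm z * Cnorm w.
Proof. unfold Cnorm; rewrite Cnorm2_mul; apply sqrt_mult; apply Cnorm2_nonneg. Qed.
Lemma Cnorm_real a : Cnorm (a, 0) = Rabs a.
Proof. unfold Cnorm, Cnorm2; simpl. rewrite <- sqrt_Rsqr_abs. unfold Rsqr. f_equal; ring. Qed.
Lemma Cnorm_fst z : Rabs (fst z) <= Cnorm z.
Proof. destruct z as [a b]; simpl. unfold Cnorm, Cnorm2; simpl. apply le_sqrt_of; [apply Rabs_pos|].
  rewrite <- Rabs_mult, Rabs_right; nra. Qed.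
Lemma Cnorm_snd z : Rabs (snd z) <= Cnorm z.
Proof. destruct z as [a b]; simpl. unfold Cnorm, Cnorm2; simpl. apply le_sqrt_of; [apply Rabs_pos|].
  rewrite <- Rabs_mult, Rabs_right; nra. Qed.
Lemma Rabs_sq a : Rabs a * Rabs a = a * a.
Proof. rewrite <- Rabs_mult; apply Rabs_right, Rle_ge, sq_nonneg. Qed.
Lemma Cnorm_comp z : Cnorm z <= Rabs (fst z) + Rabs (snd z).
Proof. destruct z as [a b]; simpl. pose proof (Rabs_pos a); pose proof (Rabs_pos b). apply sqrt_le_of. lra.
  unfold Cnorm2; simpl. rewrite <- (Rabs_sq a), <- (Rabs_sq b).
  pose proof (Rmult_le_pos _ _ H H0). nra. Qed.
Lemma Cnorm_zero_eq a b : Cnorm (Csub a b) = 0 -> a = b.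
Proof. intros h. assert (h2 : Cnorm2 (Csub a b) = 0) by (rewrite <- Cnorm_sq, h; ring).
  destruct a as [a1 a2], b as [b1 b2]; unfold Cnorm2, Csub in h2; simpl in h2.
  pose proof (sq_nonneg (a1-b1)); pose proof (sq_nonneg (a2-b2)).
  assert (e1: (a1-b1)*(a1-b1) = 0) by lra. assert (e2: (a2-b2)*(a2-b2) = 0) by lra.
  apply Rmult_integral in e1; apply Rmult_integral in e2. f_equal; lra. Qed.
Lemma Cnorm_self a : Cnorm (Csub a a) = 0.
Proof. destruct a; unfold Cnorm, Cnorm2, Csub; simpl. replace (r-r) with 0 by ring.
  replace (r0-r0) with 0 by ring. replace (0*0+0*0) with 0 by ring. apply sqrt_0. Qed.
Lemma Cnorm_small_eq a b : (forall e, 0 < e -> Cnorm (Csub a b) <= e) -> a = b.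
Proof. intros h; apply Cnorm_zero_eq, Rsmall_eq0; auto. apply Cnorm_nonneg. Qed.
Lemma Cnorm_conj z : Cnorm (Cconj z) = Cnorm z.
Proof. destruct z; unfold Cnorm, Cnorm2, Cconj; simpl; f_equal; ring. Qed.

Section Metric.
Context {X : Type}.
Variable dist : X -> X -> R.
Hypothesis d_nonneg : forall x y, 0 <= dist x y.
Hypothesis d_refl : forall x, dist x x = 0.
Hypothesis d_sym : forall x y, dist x y = dist y x.
Hypothesis d_tri : forall x y z, dist x z <= dist x y + dist y z.

Definition Dl (s t : nat -> X) : R := lim_or_zero (fun n => dist (s n) (t n)).

Lemma Dl_cv s t : Cauchy dist s -> Cauchy dist t -> Un_cv (fun n => dist (s n) (t n)) (Dl s t).
Proof. intros hs ht. assert (hc: Cauchy_crit (fun n => dist (s n) (t n))).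
  { intros e he. destruct (hs (e/2)) as [N1 h1]; [lra|]. destruct (ht (e/2)) as [N2 h2]; [lra|].
    exists (max N1 N2); intros n m hn hm. unfold R_dist.
    specialize (h1 n m ltac:(lia) ltac:(lia)). specialize (h2 n m ltac:(lia) ltac:(lia)).
    pose proof (d_tri (s n) (s m) (t n)). pose proof (d_tri (s m) (t m) (t n)).
    pose proof (d_tri (s m) (s n) (t m)). pose proof (d_tri (s n) (t n) (t m)).
    rewrite (d_sym (s m) (s n)) in *. rewrite (d_sym (t n) (t m)) in *.
    apply Rabs_def1; lra. }
  destruct (R_complete _ hc) as [l hl]. unfold Dl. rewrite (lim_eq _ l hl); auto. Qed.

Lemma Dl_eq_cv s t l : Un_cv (fun n => dist (s n) (t n)) l -> Dl s t = l.
Proof. apply lim_eq. Qed.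

Lemma Dl_nonneg s t : Cauchy dist s -> Cauchy dist t -> 0 <= Dl s t.
Proof. intros; apply (cv_zero_le _ _ (Dl_cv s t H H0)); auto. Qed.
Lemma Dl_self s t : (forall n, s n = t n) -> Dl s t = 0.
Proof. intros h; apply Dl_eq_cv. apply (cv_ext (fun _ => 0)); [|apply cv_const].
  intros n; rewrite h, d_refl; auto. Qed.
Lemma Dl_sym s t : Cauchy dist s -> Cauchy dist t -> Dl s t = Dl t s.
Proof. intros hs ht. apply Dl_eq_cv. apply (cv_ext (fun n => dist (t n) (s n))).
  intros; apply d_sym. apply Dl_cv; auto. Qed.


Lemma Dl_tri s t u : Cauchy dist s -> Cauchy dist t -> Cauchy dist u -> Dl s u <= Dl s t + Dl t u.
Proof. intros hs ht hu. apply (cv_le_cv (fun n => dist (s n) (u n)) (fun n => dist (s n) (t n) + dist (t n) (u n))).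
  apply Dl_cv; auto. apply CV_plus; apply Dl_cv; auto. intros; apply d_tri. Qed.

Lemma const_cauchy (x : X) : Cauchy dist (fun _ => x).
Proof. intros e he; exists 0%nat; intros; rewrite d_refl; auto. Qed.
Definition pt (x : X) : Compl dist := exist _ (fun _ => x) (const_cauchy x).

Lemma Dl_const x y : Dl (fun _ => x) (fun _ => y) = dist x y.
Proof. apply Dl_eq_cv, cv_const. Qed.

Lemma Dl_density s : Cauchy dist s -> forall e, 0 < e -> exists N, forall n, (N <= n)%nat -> Dl s (fun _ => s n) <= e.
Proof. intros hs e he. destruct (hs e he) as [N hN]. exists N; intros n hn.
  apply (cv_le_ev (fun m => dist (s m) (s n))). apply Dl_cv; auto; apply const_cauchy.
  exists N; intros m hm. left; apply hN; auto. Qed.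

Lemma Dl_lt_ev s t e : Cauchy dist s -> Cauchy dist t -> Dl s t < e -> exists N, forall n, (N <= n)%nat -> dist (s n) (t n) < e.
Proof. intros hs ht h. destruct (Dl_cv s t hs ht (e - Dl s t)) as [N hN]; [lra|].
  exists N; intros n hn; specialize (hN n hn); unfold R_dist in hN. apply Rabs_def2 in hN. lra. Qed.

Lemma Dl_le_ev s t e : Cauchy dist s -> Cauchy dist t -> (exists N, forall n, (N <= n)%nat -> dist (s n) (t n) <= e) -> Dl s t <= e.
Proof. intros hs ht h. apply (cv_le_ev _ _ _ (Dl_cv s t hs ht) h). Qed.

Lemma cd_nonneg (s t : Compl dist) : 0 <= cdist dist s t.
Proof. apply Dl_nonneg; apply proj2_sig. Qed.
Lemma cd_sym (s t : Compl dist) : cdist dist s t = cdist dist t s.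
Proof. apply Dl_sym; apply proj2_sig. Qed.
Lemma cd_tri (s t u : Compl dist) : cdist dist s u <= cdist dist s t + cdist dist t u.
Proof. apply Dl_tri; apply proj2_sig. Qed.
Lemma cd_self (s : Compl dist) : cdist dist s s = 0.
Proof. apply Dl_self; auto. Qed.
Lemma cd_pt x y : cdist dist (pt x) (pt y) = dist x y.
Proof. unfold cdist; simpl; apply Dl_const. Qed.
Lemma cd_density (s : Compl dist) e : 0 < e -> exists N, forall n, (N <= n)%nat -> cdist dist s (pt (proj1_sig s n)) <= e.
Proof. intros he. apply (Dl_density (proj1_sig s) (proj2_sig s) e he). Qed.

Lemma ball_open (s : Compl dist) r : copen dist (fun t => cdist dist s t < r).
Proof. intros t ht. exists (r - cdist dist s t); split; [lra|]. intros t' h'.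
  pose proof (cd_tri s t t'). lra. Qed.
Lemma open_sat (U : Compl dist -> Prop) s t : copen dist U -> U s -> cdist dist s t = 0 -> U t.
Proof. intros hU hs h. destruct (hU s hs) as [e [he h2]]. apply h2; lra. Qed.

Lemma ispoint_ceq (s t : Compl dist) x : IsPointOf dist s x -> IsPointOf dist t x -> cdist dist s t = 0.
Proof. intros h1 h2. apply Dl_self. intros n; rewrite h1, h2; auto. Qed.
Lemma ispoint_pt x : IsPointOf dist (pt x) x.
Proof. intros n; reflexivity. Qed.

Section Cpt.
Variable x0 : X.
Variable I : Type.
Variable U : I -> Compl dist -> Prop.

Definition NF (A : Compl dist -> Prop) : Prop := ~ exists l, forall t, A t -> exists i, In i l /\ U i t.
Definition rr (k : nat) : R := (/2) ^ k.
Definition choose_y (A : Compl dist -> Prop) (k : nat) : X :=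
  epsilon (inhabits x0) (fun y => NF (fun t => A t /\ cdist dist t (pt y) < rr k)).
Fixpoint Aseq (k : nat) : Compl dist -> Prop :=
  match k with O => fun _ => True
  | S k => fun t => Aseq k t /\ cdist dist t (pt (choose_y (Aseq k) k)) < rr k end.
Definition ys (k : nat) : X := choose_y (Aseq k) k.

Lemma rr_pos k : 0 < rr k.
Proof. unfold rr; apply pow_lt; lra. Qed.
Lemma rr_S k : rr (S k) = rr k / 2.
Proof. unfold rr; simpl; lra. Qed.
Lemma rr_mono n m : (n <= m)%nat -> rr m <= rr n.
Proof. induction 1; [lra|]. rewrite rr_S. pose proof (rr_pos m); lra. Qed.
Lemma rr_small e : 0 < e -> exists N, rr N < e.
Proof. intros he. destruct (pow_lt_1_zero (/2) ltac:(rewrite Rabs_right; lra) e he) as [N hN].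
  exists N. specialize (hN N (le_n N)). unfold rr. rewrite Rabs_right in hN; auto.
  apply Rle_ge; left; apply pow_lt; lra. Qed.

Lemma cover_union (P : X -> Compl dist -> Prop) (F : list X) :
  (forall y, In y F -> exists l, forall t, P y t -> exists i, In i l /\ U i t) ->
  exists l, forall t, (exists y, In y F /\ P y t) -> exists i, In i l /\ U i t.
Proof. induction F as [|a F IH]; intros h.
  - exists nil; intros t [y [[] _]].
  - destruct (h a (or_introl eq_refl)) as [la hla].
    destruct IH as [lr hlr]. intros y hy; apply h; right; auto.
    exists (la ++ lr). intros t [y [[->|hy] hp]].
    + destruct (hla t hp) as [i [hi hu]]; exists i; split; auto; apply in_or_app; auto.
    + destruct (hlr t (ex_intro _ y (conj hy hp))) as [i [hi hu]]; exists i; split; auto; apply in_or_app; auto. Qed.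

Hypothesis tb : forall e, 0 < e -> exists F : list X, forall x, exists y, In y F /\ dist x y < e.

Lemma net_c e : 0 < e -> exists F : list X, forall t : Compl dist, exists y, In y F /\ cdist dist t (pt y) < e.
Proof. intros he. destruct (tb (e/2)) as [F hF]; [lra|]. exists F; intros t.
  destruct (cd_density t (e/4)) as [N hN]; [lra|].
  destruct (hF (proj1_sig t N)) as [y [hy hd]]. exists y; split; auto.
  pose proof (cd_tri t (pt (proj1_sig t N)) (pt y)). rewrite cd_pt in H.
  specialize (hN N (le_n N)). lra. Qed.

Lemma step A k : NF A -> exists y, NF (fun t => A t /\ cdist dist t (pt y) < rr k).
Proof. intros hA. destruct (net_c (rr k) (rr_pos k)) as [F hF].
  apply NNPP; intros hn. apply hA.
  destruct (cover_union (fun y t => A t /\ cdist dist t (pt y) < rr k) F) as [l hl].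
  { intros y _. apply NNPP; intros h2. apply hn; exists y. exact h2. }
  exists l; intros t ht. apply hl. destruct (hF t) as [y [hy hd]]; exists y; auto. Qed.

Lemma Aseq_NF : NF (fun _ => True) -> forall k, NF (Aseq k).
Proof. intros h0; induction k; simpl; auto.
  apply (epsilon_spec (inhabits x0) (fun y => NF (fun t => Aseq k t /\ cdist dist t (pt y) < rr k))).
  apply step; auto. Qed.

Lemma NF_nonempty A : NF A -> exists t, A t.
Proof. intros h; apply NNPP; intros hn; apply h; exists nil; intros t ht; exfalso; eauto. Qed.

Lemma ys_close : NF (fun _ => True) -> forall k, dist (ys k) (ys (S k)) <= 2 * rr k.
Proof. intros h0 k. destruct (NF_nonempty _ (Aseq_NF h0 (S (S k)))) as [t [[_ h1] h2]].
  fold (ys k) in h1. fold (ys (S k)) in h2. rewrite <- cd_pt.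
  pose proof (cd_tri (pt (ys k)) t (pt (ys (S k)))). rewrite cd_sym in h1.
  rewrite rr_S in h2. pose proof (rr_pos k). lra. Qed.

Lemma ys_tele : NF (fun _ => True) -> forall n j, dist (ys n) (ys (n + j)) <= 4 * (rr n - rr (n + j)).
Proof. intros h0 n j. induction j.
  - rewrite Nat.add_0_r, d_refl. lra.
  - replace (n + S j)%nat with (S (n + j)) by lia. pose proof (ys_close h0 (n + j)).
    pose proof (d_tri (ys n) (ys (n+j)) (ys (S (n+j)))). rewrite rr_S. lra. Qed.

Lemma ys_bound : NF (fun _ => True) -> forall n m, (n <= m)%nat -> dist (ys n) (ys m) <= 4 * rr n.
Proof. intros h0 n m h. replace m with (n + (m - n))%nat by lia. pose proof (ys_tele h0 n (m - n)).
  pose proof (rr_pos (n + (m - n))). lra. Qed.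

Lemma ys_cauchy : NF (fun _ => True) -> Cauchy dist ys.
Proof. intros h0 e he. destruct (rr_small (e/4)) as [N hN]; [lra|]. exists N; intros n m hn hm.
  destruct (Nat.le_ge_cases n m).
  - pose proof (ys_bound h0 n m H). pose proof (rr_mono N n hn). lra.
  - pose proof (ys_bound h0 m n H). pose proof (rr_mono N m hm). rewrite d_sym. lra. Qed.

Hypothesis HU : forall i, copen dist (U i).
Hypothesis Hcov : forall t, exists i, U i t.

Lemma compact_main : exists l : list I, forall t, exists i, In i l /\ U i t.
Proof. apply NNPP; intros Hnf.
  assert (h0 : NF (fun _ => True)). { intros [l hl]. apply Hnf; exists l; intros t; apply hl; auto. }
  set (p := exist (Cauchy dist) ys (ys_cauchy h0) : Compl dist).
  assert (hp : forall n, cdist dist p (pt (ys n)) <= 4 * rr n).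
  { intros n. apply Dl_le_ev; [apply ys_cauchy; auto| apply (proj2_sig (pt (ys n)))|].
    exists n; intros m hm; simpl. rewrite d_sym. apply ys_bound; auto. }
  destruct (Hcov p) as [i hi]. destruct (HU i p hi) as [e [he hb]].
  destruct (rr_small (e/5)) as [n hn]; [lra|].
  apply (Aseq_NF h0 (S n)). exists (i :: nil). intros t [_ ht]. exists i; split; [left; auto|].
  apply hb. fold (ys n) in ht. pose proof (cd_tri p (pt (ys n)) t). rewrite (cd_sym (pt (ys n)) t) in H.
  pose proof (hp n). lra. Qed.
End Cpt.

Theorem compl_compact (x0 : X) :
  (forall e, 0 < e -> exists F : list X, forall x, exists y, In y F /\ dist x y < e) ->
  Compact (copen dist).
Proof. intros tb I U HU Hcov. apply (compact_main x0 I U tb HU Hcov). Qed.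

End Metric.

Lemma summable_tail {T} (g:T->R) : (forall x, 0 <= g x) -> Summable g -> forall e, 0 < e ->
  exists L, NoDup L /\ forall L', NoDup L' -> (forall p, In p L' -> ~ In p L) -> fsum g L' < e.
Proof. intros hg [M hM] e he.
  set (E := fun t => exists L, NoDup L /\ t = fsum g L).
  assert (hne: exists t, E t) by (exists 0, nil; split; [constructor|auto]).
  assert (hb: forall t, E t -> t <= M) by (intros t [L [h ->]]; auto).
  assert (exists L, NoDup L /\ sup_or_zero E - e < fsum g L) as [L [hL hL2]].
  { apply NNPP; intros hn. assert (sup_or_zero E <= sup_or_zero E - e); [|lra].
    apply sup_le; auto. intros t [L [h ->]]. apply Rnot_lt_le; intros h2; apply hn; exists L; auto. }
  exists L; split; auto. intros L' h1 h2.
  assert (E (fsum g (L ++ L'))). { exists (L ++ L'); split; auto. apply NoDup_app; auto.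
    intros a ha hb'; exact (h2 a hb' ha). }
  pose proof (sup_ub E _ H (ex_intro _ M hb)). rewrite fsum_app in H0. lra. Qed.

Fixpoint lst {X} (x : X) (q : list X) : X := match q with nil => x | y :: q' => lst y q' end.
Lemma last_default {X} (y d1 d2 : X) q : last (y :: q) d1 = last (y :: q) d2.
Proof. revert y; induction q; intros y; [reflexivity|]. change (last (a::q) d1 = last (a::q) d2); apply IHq. Qed.
Lemma last_lst {X} (x : X) q : last (x :: q) x = lst x q.
Proof. revert x; induction q; intros x; [reflexivity|]. simpl lst. rewrite <- IHq.
  change (last (a::q) x = last (a::q) a). apply last_default. Qed.
Lemma lst_app {X} (x : X) q1 q2 : lst x (q1 ++ q2) = lst (lst x q1) q2.
Proof. revert x; induction q1; intros x; simpl; auto. Qed.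
Lemma lst_in {X} (x : X) q : In (lst x q) (x :: q).
Proof. revert x; induction q; intros x; simpl; auto. right; apply IHq. Qed.

Fixpoint cp {X} (x : X) (q : list X) : list (X * X) := match q with nil => nil | y :: q' => (x, y) :: cp y q' end.
Lemma cp_fst {X} (x : X) q p : In p (cp x q) -> In (fst p) (x :: q).
Proof. revert x; induction q; intros x; simpl; [tauto|]. intros [<-|h]; simpl; auto.
  specialize (IHq a h). simpl in IHq. tauto. Qed.
Lemma cp_nodup {X} (x : X) q : NoDup (x :: q) -> NoDup (cp x q).
Proof. revert x; induction q; intros x h; simpl; [constructor|]. inversion h; subst. constructor.
  - intros hin. apply cp_fst in hin. simpl in hin. auto.
  - apply IHq. inversion H2; subst. constructor; auto. Qed.

Section Graph.
Context {X : Type}.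
Variable b : X -> X -> R.
Hypothesis b_nonneg : forall x y, 0 <= b x y.
Hypothesis b_sym : forall x y, b x y = b y x.
Hypothesis Hconn : Connected b.

Lemma chain_app x q1 q2 : chain b x (q1 ++ q2) <-> chain b x q1 /\ chain b (lst x q1) q2.
Proof. revert x; induction q1; intros x; simpl; [tauto|]. rewrite IHq1; tauto. Qed.
Lemma pweight_app x q1 q2 : pweight b x (q1 ++ q2) = pweight b x q1 + pweight b (lst x q1) q2.
Proof. revert x; induction q1; intros x; simpl; [lra|]. rewrite IHq1; lra. Qed.
Lemma pweight_nonneg x q : chain b x q -> 0 <= pweight b x q.
Proof. revert x; induction q; intros x h; simpl; [lra|]. destruct h as [h1 h2].
  pose proof (Rinv_0_lt_compat _ h1). pose proof (IHq a h2). lra. Qed.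

Definition IsP x q y := NoDup (x :: q) /\ chain b x q /\ lst x q = y.
Lemma IsP_iff x q y : IsPath b x q y <-> IsP x q y.
Proof. unfold IsPath, IsP. rewrite last_lst. tauto. Qed.

Lemma suffix z p A x B : chain b z p -> z :: p = A ++ x :: B ->
  chain b x B /\ pweight b x B <= pweight b z p /\ lst x B = lst z p /\ (NoDup (z :: p) -> NoDup (x :: B)).
Proof. revert z p; induction A as [|a A IH]; intros z p hc he; simpl in he.
  - inversion he; subst. split; auto. split; [lra|]. auto.
  - destruct p as [|y p'].
    + injection he as _ he2. destruct A; discriminate.
    + injection he as _ he2. destruct hc as [hb hc]. destruct (IH y p' hc he2) as [h1 [h2 [h3 h4]]].
      split; auto. split. simpl. pose proof (Rinv_0_lt_compat _ hb). lra.
      split; auto. intros hn. apply h4. inversion hn; auto. Qed.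

Lemma shorten q x : chain b x q -> exists q', IsP x q' (lst x q) /\ pweight b x q' <= pweight b x q.
Proof. revert x; induction q as [|z q1 IH]; intros x hc.
  - exists nil. split; [split; [constructor; [simpl; auto|constructor]| split; simpl; auto]|simpl; lra].
  - destruct hc as [hb hc]. destruct (IH z hc) as [p [[hnd [hch hl]] hw]]. simpl.
    pose proof (Rinv_0_lt_compat _ hb).
    destruct (classic (In x (z :: p))) as [hin|hnin].
    + destruct (in_split _ _ hin) as [A [B hAB]].
      destruct (suffix z p A x B hch hAB) as [h1 [h2 [h3 h4]]].
      exists B. split; [split; [auto|split; auto]|]. rewrite h3; auto. simpl. lra.
    + exists (z :: p). split; [split; [constructor; auto|split; [split; auto|simpl; auto]]|].
      simpl; lra. Qed.

Definition PS x y t := exists q, IsPath b x q y /\ t = pweight b x q.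
Lemma PS_ne x y : exists t, PS x y t.
Proof. destruct (classic (x = y)) as [<-|hne].
  - exists 0, nil. split; [|simpl; auto]. apply IsP_iff. split; [constructor; [simpl; auto|constructor]|split; simpl; auto].
  - destruct (Hconn x y hne) as [q hq]. exists (pweight b x q), q; auto. Qed.
Lemma PS_lb x y t : PS x y t -> 0 <= t.
Proof. intros [q [hq ->]]. apply IsP_iff in hq. apply pweight_nonneg, hq. Qed.

Lemma dm_nonneg x y : 0 <= dmetric b x y.
Proof. apply le_inf; [apply PS_ne|apply PS_lb]. Qed.
Lemma dm_le_path x q y : IsPath b x q y -> dmetric b x y <= pweight b x q.
Proof. intros h. apply (inf_le _ _ 0); [exists q; auto|apply PS_lb]. Qed.
Lemma dm_le_walk x q : chain b x q -> dmetric b x (lst x q) <= pweight b x q.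
Proof. intros h. destruct (shorten q x h) as [q' [h1 h2]]. apply IsP_iff in h1.
  pose proof (dm_le_path _ _ _ h1). lra. Qed.
Lemma dm_refl x : dmetric b x x = 0.
Proof. pose proof (dm_nonneg x x). pose proof (dm_le_walk x nil I). simpl in H0. lra. Qed.
Lemma dm_edge x y : 0 < b x y -> dmetric b x y <= / b x y.
Proof. intros h. pose proof (dm_le_walk x (y :: nil) (conj h I)). simpl in H. lra. Qed.

Lemma dm_tri x y z : dmetric b x z <= dmetric b x y + dmetric b y z.
Proof.
  assert (h: forall t1 t2, PS x y t1 -> PS y z t2 -> dmetric b x z <= t1 + t2).
  { intros t1 t2 [p1 [h1 ->]] [p2 [h2 ->]]. apply IsP_iff in h1; apply IsP_iff in h2.
    destruct h1 as [_ [c1 l1]], h2 as [_ [c2 l2]].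
    assert (hc: chain b x (p1 ++ p2)) by (apply chain_app; rewrite l1; auto).
    pose proof (dm_le_walk _ _ hc). rewrite lst_app, l1, l2, pweight_app, l1 in H. auto. }
  assert (h2: forall t2, PS y z t2 -> dmetric b x z - t2 <= dmetric b x y).
  { intros t2 ht2. apply le_inf; [apply PS_ne|]. intros t1 ht1. specialize (h t1 t2 ht1 ht2). lra. }
  assert (dmetric b x z - dmetric b x y <= dmetric b y z).
  { apply le_inf; [apply PS_ne|]. intros t2 ht2. specialize (h2 t2 ht2). lra. }
  lra. Qed.

Lemma walk_rev x q : chain b x q -> exists q', chain b (lst x q) q' /\ lst (lst x q) q' = x /\ pweight b (lst x q) q' = pweight b x q.
Proof. revert x; induction q as [|z q1 IH]; intros x hc.
  - exists nil; simpl; repeat split; auto.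
  - destruct hc as [hb hc]. destruct (IH z hc) as [r [h1 [h2 h3]]]. simpl.
    exists (r ++ x :: nil). split; [|split].
    + apply chain_app. split; auto. rewrite h2. simpl. rewrite b_sym; auto.
    + rewrite lst_app, h2; auto.
    + rewrite pweight_app, h2, h3. simpl. rewrite b_sym. lra. Qed.

Lemma dm_sym_le x y : dmetric b y x <= dmetric b x y.
Proof. apply le_inf; [apply PS_ne|]. intros t [q [hq ->]]. apply IsP_iff in hq. destruct hq as [_ [hc hl]].
  destruct (walk_rev x q hc) as [r [h1 [h2 h3]]]. pose proof (dm_le_walk _ _ h1).
  rewrite h2, hl in H. rewrite hl in h3. lra. Qed.
Lemma dm_sym x y : dmetric b x y = dmetric b y x.
Proof. pose proof (dm_sym_le x y); pose proof (dm_sym_le y x); lra. Qed.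

Lemma invb_nonneg p : 0 <= invb b p.
Proof. unfold invb. destruct Rlt_dec; [left; apply Rinv_0_lt_compat; auto|lra]. Qed.
Lemma pweight_cp x q : chain b x q -> pweight b x q = fsum (invb b) (cp x q).
Proof. revert x; induction q; intros x h; simpl; auto. destruct h as [h1 h2].
  rewrite IHq; auto. unfold invb; simpl. destruct Rlt_dec; [auto|contradiction]. Qed.

Lemma prefix_path (F : list X) q x : chain b x q -> NoDup (x :: q) -> In (lst x q) F ->
  exists y r, In y F /\ IsP x r y /\ (forall p, In p (cp x r) -> ~ In (fst p) F) /\ incl r q.
Proof. revert x; induction q as [|z q1 IH]; intros x hc hnd hin.
  - exists x, nil. split; auto. split; [split; [auto|split; simpl; auto]|]. split; [simpl; tauto|]. intros a ha; auto.
  - destruct (classic (In x F)) as [hx|hx].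
    + exists x, nil. split; auto. split; [split; [constructor; [simpl; auto|constructor]|split; simpl; auto]|].
      split; [simpl; tauto|]. intros a []; auto.
    + destruct hc as [hb hc]. inversion hnd; subst.
      destruct (IH z hc H2 hin) as [y [r [hy [[h1 [h2 h3]] [h4 h5]]]]].
      exists y, (z :: r). split; auto. split; [split; [|split; [split; auto|simpl; auto]]|].
      * constructor; auto. intros hin2. apply H1. destruct hin2 as [->|hin2]; [left; auto|right; apply h5; auto].
      * split. intros p hp. destruct hp as [hp|hp]; [rewrite <- hp; simpl; exact hx| exact (h4 p hp)].
        intros a [->|ha]; [left; auto|right; apply h5; auto]. Qed.

Hypothesis Hb : Summable (invb b).

Lemma dm_tb (x0 : X) : forall e, 0 < e -> exists F : list X, forall x, exists y, In y F /\ dmetric b x y < e.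
Proof. intros e he. destruct (summable_tail (invb b) invb_nonneg Hb e he) as [L [hL hL2]].
  exists (x0 :: map fst L). intros x.
  destruct (classic (x = x0)) as [->|hne].
  - exists x0; split; [left; auto|]. rewrite dm_refl; auto.
  - destruct (Hconn x x0 hne) as [q hq]. apply IsP_iff in hq. destruct hq as [h1 [h2 h3]].
    destruct (prefix_path (x0 :: map fst L) q x h2 h1) as [y [r [hy [hr [hr2 _]]]]].
    rewrite h3; left; auto.
    exists y; split; auto. destruct hr as [hr1 [hr2' hr3]].
    assert (IsPath b x r y) by (apply IsP_iff; split; auto).
    pose proof (dm_le_path _ _ _ H). rewrite pweight_cp in H0; auto.
    assert (fsum (invb b) (cp x r) < e).
    { apply hL2. apply cp_nodup; auto. intros p hp hpL. apply (hr2 p hp). right. apply in_map; auto. }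
    lra. Qed.
End Graph.

Lemma Rmin1_lip a b : Rabs (Rmin a 1 - Rmin b 1) <= Rabs (a - b).
Proof. unfold Rmin; repeat destruct Rle_dec; unfold Rabs; repeat destruct Rcase_abs; lra. Qed.

Lemma Cnorm_le_add z w : Cnorm z <= Cnorm w + Cnorm (Csub z w).
Proof. replace z with (Cadd w (Csub z w)) at 1. apply Cnorm_add.
  destruct z, w; unfold Cadd, Csub; simpl; f_equal; ring. Qed.

Definition fscale {X} (k : R) (f : X -> C) : X -> C := fun x => (k * fst (f x), k * snd (f x)).
Lemma Cnorm2_scale_sub {X} k (f : X -> C) x y : Cnorm2 (Csub (fscale k f x) (fscale k f y)) = k * k * Cnorm2 (Csub (f x) (f y)).
Proof. unfold fscale, Cnorm2, Csub; simpl; ring. Qed.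
Lemma Cnorm2_scale {X} k (f : X -> C) x : Cnorm2 (fscale k f x) = k * k * Cnorm2 (f x).
Proof. unfold fscale, Cnorm2; simpl; ring. Qed.

Section Energy.
Context {X : Type}.
Variable b : X -> X -> R.
Variable c : X -> R.
Hypothesis b_nonneg : forall x y, 0 <= b x y.
Hypothesis b_sym : forall x y, b x y = b y x.
Hypothesis c_nonneg : forall x, 0 <= c x.
Hypothesis Hconn : Connected b.
Hypothesis Hb : Summable (invb b).
Hypothesis Hc : Summable c.
Let pwn := pweight_nonneg b b_nonneg b_sym Hconn.
Let dmt := dm_tri b b_nonneg b_sym Hconn.
Let dms := dm_sym b b_nonneg b_sym Hconn.
Let dme := dm_edge b b_nonneg b_sym Hconn.
Let dmn := dm_nonneg b b_nonneg b_sym Hconn.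
Let dmr := dm_refl b b_nonneg b_sym Hconn.
Let pcp := pweight_cp b b_nonneg b_sym Hconn.

Definition GG (f : X -> C) u v := b u v * Cnorm2 (Csub (f u) (f v)).
Definition DS f l := fsum (fun u => fsum (fun v => GG f u v) l) l.
Lemma GG_nonneg f u v : 0 <= GG f u v.
Proof. unfold GG; apply Rmult_le_pos; auto; apply Cnorm2_nonneg. Qed.
Lemma GG_sym f u v : GG f u v = GG f v u.
Proof. unfold GG; rewrite b_sym, Cnorm2_sym; auto. Qed.
Lemma DS_cons f x l : DS f (x :: l) = GG f x x + fsum (GG f x) l + fsum (fun u => GG f u x) l + DS f l.
Proof. unfold DS. change (fsum (fun v => GG f x v) (x :: l) + fsum (fun u => fsum (fun v => GG f u v) (x :: l)) l
   = GG f x x + fsum (GG f x) l + fsum (fun u => GG f u x) l + fsum (fun u => fsum (fun v => GG f u v) l) l).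
  simpl. rewrite (fsum_ext (fun u => GG f u x + fsum (fun v => GG f u v) l) _ l) by (intros; reflexivity).
  rewrite fsum_plus. assert (fsum (fun v => GG f x v) l = fsum (GG f x) l) as -> by reflexivity. lra. Qed.
Lemma DS_nonneg f l : 0 <= DS f l.
Proof. unfold DS. apply fsum_nonneg; intros; apply fsum_nonneg; intros; apply GG_nonneg. Qed.
Lemma Qpart_eq f l : Qpart b c f l = / 2 * DS f l + fsum (fun x => c x * Cnorm2 (f x)) l.
Proof. reflexivity. Qed.
Lemma Qpart_ge_DS f l : / 2 * DS f l <= Qpart b c f l.
Proof. rewrite Qpart_eq. assert (0 <= fsum (fun x => c x * Cnorm2 (f x)) l); [|lra].
  apply fsum_nonneg; intros; apply Rmult_le_pos; auto; apply Cnorm2_nonneg. Qed.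

Fixpoint Epath (f : X -> C) x q := match q with nil => 0 | y :: q' => GG f x y + Epath f y q' end.
Lemma Epath_le f x q : Epath f x q <= / 2 * DS f (x :: q).
Proof. revert x; induction q as [|z q IH]; intros x; simpl Epath.
  - rewrite DS_cons. unfold DS; simpl. pose proof (GG_nonneg f x x). lra.
  - rewrite DS_cons. specialize (IH z). simpl fsum.
    rewrite (GG_sym f z x). pose proof (fsum_nonneg (GG f x) q (GG_nonneg f x)).
    pose proof (fsum_nonneg (fun u => GG f u x) q (fun u => GG_nonneg f u x)).
    pose proof (GG_nonneg f x x). lra. Qed.

Lemma Epath_nonneg f x q : 0 <= Epath f x q.
Proof. revert x; induction q; intros z; simpl; [lra|].
  pose proof (GG_nonneg f z a). specialize (IHq a). lra. Qed.
Lemma cs_path f x q : chain b x q ->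
  Cnorm (Csub (f x) (f (lst x q))) * Cnorm (Csub (f x) (f (lst x q))) <= pweight b x q * Epath f x q.
Proof. revert x; induction q as [|z q IH]; intros x hc; simpl.
  - rewrite Cnorm_self; lra.
  - destruct hc as [hb hc]. specialize (IH z hc).
    set (y := lst z q) in *. set (A := Cnorm (Csub (f x) (f z))). set (B := Cnorm (Csub (f z) (f y))).
    set (W := pweight b z q) in *. set (E := Epath f z q) in *.
    assert (hA: A * A = / b x z * GG f x z). { unfold A, GG. rewrite Cnorm_sq. field. lra. }
    assert (hA0: 0 <= A) by apply Cnorm_nonneg. assert (hB0: 0 <= B) by apply Cnorm_nonneg.
    assert (hW: 0 <= W) by (apply pweight_nonneg; auto).
    assert (hE: 0 <= E) by apply Epath_nonneg.
    assert (hw0: 0 < / b x z) by (apply Rinv_0_lt_compat; auto).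
    assert (he0: 0 <= GG f x z) by apply GG_nonneg.
    assert (h2: 2 * (A * B) <= / b x z * E + W * GG f x z).
    { apply two_sqrt_le. apply Rmult_le_pos; auto. apply Rmult_le_pos; lra. apply Rmult_le_pos; lra.
      replace (A * B * (A * B)) with ((A * A) * (B * B)) by ring. rewrite hA.
      replace (/ b x z * E * (W * GG f x z)) with ((/ b x z * GG f x z) * (W * E)) by ring.
      apply Rmult_le_compat_l; auto. apply Rmult_le_pos; lra. }
    pose proof (Cnorm_tri (f x) (f z) (f y)). fold A B in H.
    pose proof (Cnorm_nonneg (Csub (f x) (f y))).
    assert (Cnorm (Csub (f x) (f y)) * Cnorm (Csub (f x) (f y)) <= (A + B) * (A + B)).
    { apply Rmult_le_compat; auto. }
    assert (e1: (A+B)*(A+B) = A*A + 2*(A*B) + B*B) by ring.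
    assert (e2: (/ b x z + W) * (GG f x z + E) = / b x z * GG f x z + / b x z * E + W * GG f x z + W * E) by ring.
    rewrite e2. fold B in IH. lra. Qed.

Lemma Qle_nonneg f M : Qle b c f M -> 0 <= M.
Proof. intros h. specialize (h nil (NoDup_nil _)). unfold Qpart in h; simpl in h. lra. Qed.

Lemma path_bound f M x q y : Qle b c f M -> IsPath b x q y ->
  Cnorm (Csub (f x) (f y)) * Cnorm (Csub (f x) (f y)) <= pweight b x q * M.
Proof. intros hQ hp. apply (IsP_iff b b_nonneg b_sym Hconn) in hp. destruct hp as [hnd [hc hl]]. subst y.
  pose proof (cs_path f x q hc). pose proof (Epath_le f x q). pose proof (Qpart_ge_DS f (x :: q)).
  pose proof (hQ (x :: q) hnd). pose proof (pwn x q hc).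
  apply Rle_trans with (1 := H). apply Rmult_le_compat_l; auto. lra. Qed.

Definition Wb := sup_or_zero (fun t => exists L, NoDup L /\ t = fsum (invb b) L).
Lemma Wb_spec L : NoDup L -> fsum (invb b) L <= Wb.
Proof. intros h. destruct Hb as [M hM]. apply sup_ub. exists L; auto. exists M. intros t [L' [h' ->]]; auto. Qed.
Lemma Wb_nonneg : 0 <= Wb.
Proof. apply (Wb_spec nil (NoDup_nil _)). Qed.
Definition Wc := sup_or_zero (fun t => exists L, NoDup L /\ t = fsum c L).
Lemma Wc_spec L : NoDup L -> fsum c L <= Wc.
Proof. intros h. destruct Hc as [M hM]. apply sup_ub. exists L; auto. exists M. intros t [L' [h' ->]]; auto. Qed.

Lemma pw_bound x q y : IsPath b x q y -> pweight b x q <= Wb.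
Proof. intros hp. apply (IsP_iff b b_nonneg b_sym Hconn) in hp. destruct hp as [hnd [hc _]].
  rewrite pcp; auto. apply Wb_spec, cp_nodup; auto. Qed.

Lemma diff_bound f M x y : Qle b c f M -> Cnorm (Csub (f x) (f y)) * Cnorm (Csub (f x) (f y)) <= Wb * M.
Proof. intros hQ. pose proof (Qle_nonneg f M hQ). pose proof Wb_nonneg.
  destruct (classic (x = y)) as [<-|hne].
  - rewrite Cnorm_self. nra.
  - destruct (Hconn x y hne) as [q hq]. pose proof (path_bound f M x q y hQ hq).
    pose proof (pw_bound x q y hq). nra. Qed.

Lemma canon (x0 : X) : CanonicallyCompactifiable b c.
Proof. intros f [M hM]. exists (Cnorm (f x0) + sqrt (Wb * M)). intros x.
  pose proof (Cnorm_le_add (f x) (f x0)). pose proof (diff_bound f M x x0 hM).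
  assert (Cnorm (Csub (f x) (f x0)) <= sqrt (Wb * M)).
  { apply le_sqrt_of; auto. apply Cnorm_nonneg. }
  lra. Qed.

Definition RS x y t := exists f, Qle b c f 1 /\ t = Cnorm (Csub (f x) (f y)).
Lemma fsum_zero {T} (g : T -> R) l : (forall x, In x l -> g x = 0) -> fsum g l = 0.
Proof. induction l; simpl; intros h; auto. rewrite h, IHl; auto. lra. Qed.
Lemma Qle_zero : Qle b c (fun _ => C0) 1.
Proof. intros l _.
  assert (h1: DS (fun _ => C0) l = 0). { unfold DS. apply fsum_zero. intros u _. apply fsum_zero. intros v _. unfold GG, Cnorm2, Csub, C0; simpl; ring. }
  assert (h2: fsum (fun x => c x * Cnorm2 C0) l = 0) by (apply fsum_zero; intros; unfold Cnorm2, C0; simpl; ring).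
  rewrite Qpart_eq, h1. cbv beta. rewrite h2; lra. Qed.
Lemma RS_ne x y : exists t, RS x y t.
Proof. exists 0, (fun _ => C0). split. apply Qle_zero. rewrite Cnorm_self; auto. Qed.
Lemma RS_bd x y : exists B, forall t, RS x y t -> t <= B.
Proof. exists (sqrt Wb). intros t [f [hf ->]]. apply le_sqrt_of. apply Cnorm_nonneg.
  pose proof (diff_bound f 1 x y hf). lra. Qed.
Lemma rho_ub f x y : Qle b c f 1 -> Cnorm (Csub (f x) (f y)) <= rho b c x y.
Proof. intros h. apply sup_ub; [exists f; auto|apply RS_bd]. Qed.
Lemma rho_le x y B : (forall f, Qle b c f 1 -> Cnorm (Csub (f x) (f y)) <= B) -> rho b c x y <= B.
Proof. intros h. apply sup_le; [apply RS_ne|]. intros t [f [hf ->]]; auto. Qed.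
Lemma rho_nonneg x y : 0 <= rho b c x y.
Proof. pose proof (rho_ub _ x y Qle_zero). rewrite Cnorm_self in H. auto. Qed.
Lemma rho_refl x : rho b c x x = 0.
Proof. pose proof (rho_nonneg x x). assert (rho b c x x <= 0); [|lra].
  apply rho_le; intros; rewrite Cnorm_self; lra. Qed.
Lemma rho_sym_le x y : rho b c x y <= rho b c y x.
Proof. apply rho_le; intros f hf. rewrite Cnorm_sym. apply rho_ub; auto. Qed.
Lemma rho_sym x y : rho b c x y = rho b c y x.
Proof. pose proof (rho_sym_le x y); pose proof (rho_sym_le y x); lra. Qed.
Lemma rho_tri x y z : rho b c x z <= rho b c x y + rho b c y z.
Proof. apply rho_le; intros f hf. pose proof (Cnorm_tri (f x) (f y) (f z)).
  pose proof (rho_ub f x y hf). pose proof (rho_ub f y z hf). lra. Qed.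

Lemma rho_sq_path x q y : IsPath b x q y -> rho b c x y * rho b c x y <= pweight b x q.
Proof. intros hp. pose proof (pwn x q (proj1 (proj2 hp))).
  assert (rho b c x y <= sqrt (pweight b x q)).
  { apply rho_le; intros f hf. apply le_sqrt_of. apply Cnorm_nonneg. pose proof (path_bound f 1 x q y hf hp). lra. }
  pose proof (rho_nonneg x y). pose proof (sqrt_sqrt _ H). pose proof (sqrt_pos (pweight b x q)). nra. Qed.
Lemma rho_sq_dm x y : rho b c x y * rho b c x y <= dmetric b x y.
Proof. apply le_inf; [apply (PS_ne b b_nonneg b_sym Hconn)|]. intros t [q [hq ->]]. apply rho_sq_path; auto. Qed.

Lemma Qpart_scale k f l : Qpart b c (fscale k f) l = k * k * Qpart b c f l.
Proof. rewrite !Qpart_eq. unfold DS, GG.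
  rewrite (fsum_ext (fun u => fsum (fun v => b u v * Cnorm2 (Csub (fscale k f u) (fscale k f v))) l)
     (fun u => k * k * fsum (fun v => b u v * Cnorm2 (Csub (f u) (f v))) l)).
  rewrite (fsum_ext (fun x => c x * Cnorm2 (fscale k f x)) (fun x => k * k * (c x * Cnorm2 (f x)))).
  rewrite !fsum_scal. ring.
  intros; rewrite Cnorm2_scale; ring.
  intros u _. rewrite <- fsum_scal. apply fsum_ext. intros v _. rewrite Cnorm2_scale_sub; ring. Qed.

Lemma lip_rho f M x y : Qle b c f M -> Cnorm (Csub (f x) (f y)) <= sqrt (M + 1) * rho b c x y.
Proof. intros hQ. pose proof (Qle_nonneg f M hQ).
  assert (hs: 0 < sqrt (M + 1)) by (apply sqrt_lt_R0; lra).
  set (k := / sqrt (M + 1)).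
  assert (hk: 0 < k) by (apply Rinv_0_lt_compat; auto).
  assert (hkk: k * k * (M + 1) = 1).
  { unfold k. rewrite <- Rinv_mult, sqrt_sqrt by lra. field. lra. }
  assert (hQ2: Qle b c (fscale k f) 1).
  { intros l hl. rewrite Qpart_scale. specialize (hQ l hl). assert (0 <= k * k) by nra.
    apply Rle_trans with (k * k * M). apply Rmult_le_compat_l; auto. nra. }
  pose proof (rho_ub _ x y hQ2).
  assert (Cnorm (Csub (fscale k f x) (fscale k f y)) = k * Cnorm (Csub (f x) (f y))).
  { unfold Cnorm. rewrite Cnorm2_scale_sub. rewrite sqrt_mult by (try nra; apply Cnorm2_nonneg).
    rewrite sqrt_square; lra. }
  rewrite H1 in H0. unfold k in H0.
  apply (Rmult_le_reg_l (/ sqrt (M+1))). apply Rinv_0_lt_compat; auto.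
  replace (/ sqrt (M + 1) * (sqrt (M + 1) * rho b c x y)) with (rho b c x y) by (field; lra). auto. Qed.

Definition hz (z : X) : X -> C := fun x => (Rmin (dmetric b x z) 1, 0).
Definition Mh := Wb / 2 + Wc.

Lemma hz_diff z u v : Rabs (Rmin (dmetric b u z) 1 - Rmin (dmetric b v z) 1) <= dmetric b u v.
Proof. apply Rle_trans with (1 := Rmin1_lip _ _).
  pose proof (dmt u v z). pose proof (dmt v u z).
  rewrite (dms v u) in H0. unfold Rabs; destruct Rcase_abs; lra. Qed.

Lemma hz_Qle z : Qle b c (hz z) Mh.
Proof. intros l hl. rewrite Qpart_eq. unfold Mh.
  assert (DS (hz z) l <= Wb).
  { unfold DS. rewrite fsum_prod. apply Rle_trans with (fsum (invb b) (list_prod l l)).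
    - apply fsum_le. intros [u v] _. simpl. unfold GG, invb; simpl. destruct Rlt_dec as [h|h].
      + pose proof (hz_diff z u v). pose proof (dme u v h).
        unfold hz, Cnorm2, Csub; simpl.
        set (a := Rmin (dmetric b u z) 1 - Rmin (dmetric b v z) 1) in *.
        assert (a * a <= / b u v * / b u v).
        { rewrite <- Rabs_sq. apply Rmult_le_compat; try apply Rabs_pos; lra. }
        replace ((0-0)*(0-0)) with 0 by ring. rewrite Rplus_0_r.
        apply Rle_trans with (b u v * (/ b u v * / b u v)). apply Rmult_le_compat_l; auto. right; field; lra.
      + assert (b u v = 0) by (pose proof (b_nonneg u v); lra). rewrite H; lra.
    - apply Wb_spec, NoDup_prod; auto. }
  assert (fsum (fun x => c x * Cnorm2 (hz z x)) l <= Wc).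
  { apply Rle_trans with (fsum c l); [|apply Wc_spec; auto]. apply fsum_le. intros x _.
    unfold hz, Cnorm2; simpl. pose proof (dmn x z).
    assert (0 <= Rmin (dmetric b x z) 1 <= 1) by (unfold Rmin; destruct Rle_dec; lra).
    pose proof (c_nonneg x). set (m := Rmin (dmetric b x z) 1) in *.
    replace (m * m + 0 * 0) with (m * m) by ring. assert (m * m <= 1) by nra.
    apply Rle_trans with (c x * 1); [apply Rmult_le_compat_l; auto| lra]. }
  lra. Qed.

Lemma hz_bounded z : Bounded (hz z).
Proof. exists 1. intros x. unfold hz. rewrite Cnorm_real. pose proof (dmn x z).
  unfold Rmin; destruct Rle_dec; rewrite Rabs_right; lra. Qed.

Definition Kc := sqrt (Mh + 1).
Lemma Mh_nonneg : 0 <= Mh.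
Proof. unfold Mh. pose proof Wb_nonneg. pose proof (Wc_spec nil (NoDup_nil _)). simpl in H0. lra. Qed.
Lemma Kc_pos : 0 < Kc.
Proof. unfold Kc; apply sqrt_lt_R0; pose proof Mh_nonneg; lra. Qed.
Lemma min_dm_rho x y : Rmin (dmetric b x y) 1 <= Kc * rho b c x y.
Proof. pose proof (lip_rho (hz y) Mh x y (hz_Qle y)). unfold hz, Csub in H; simpl in H.
  replace (0 - 0) with 0 in H by ring. rewrite Cnorm_real in H. rewrite dmr in H.
  replace (Rmin 0 1) with 0 in H by (unfold Rmin; destruct Rle_dec; lra).
  pose proof (dmn x y). assert (0 <= Rmin (dmetric b x y) 1) by (unfold Rmin; destruct Rle_dec; lra).
  rewrite Rabs_right in H by lra. unfold Kc. lra. Qed.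

Lemma cauchy_d_rho s : Cauchy (dmetric b) s -> Cauchy (rho b c) s.
Proof. intros h e he. destruct (h (e * e)) as [N hN]; [nra|]. exists N; intros n m hn hm.
  specialize (hN n m hn hm). pose proof (rho_sq_dm (s n) (s m)). pose proof (rho_nonneg (s n) (s m)).
  destruct (Rlt_le_dec (rho b c (s n) (s m)) e); auto. nra. Qed.
Lemma cauchy_rho_d s : Cauchy (rho b c) s -> Cauchy (dmetric b) s.
Proof. intros h e he. set (e' := Rmin e 1). assert (0 < e') by (unfold e', Rmin; destruct Rle_dec; lra).
  destruct (h (e' / Kc)) as [N hN]. apply Rdiv_lt_0_compat; auto; apply Kc_pos.
  exists N; intros n m hn hm. specialize (hN n m hn hm). pose proof (min_dm_rho (s n) (s m)).
  pose proof Kc_pos. assert (Kc * rho b c (s n) (s m) < e').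
  { apply (Rmult_lt_compat_l Kc) in hN; auto. replace (Kc * (e' / Kc)) with e' in hN by (field; lra). auto. }
  unfold e', Rmin in *. repeat destruct Rle_dec; lra. Qed.

Lemma Dlcv_rho s t : Cauchy (rho b c) s -> Cauchy (rho b c) t -> Un_cv (fun n => rho b c (s n) (t n)) (Dl (rho b c) s t).
Proof. apply (Dl_cv (rho b c) rho_nonneg rho_refl rho_sym rho_tri). Qed.
Lemma Dlcv_dm s t : Cauchy (dmetric b) s -> Cauchy (dmetric b) t -> Un_cv (fun n => dmetric b (s n) (t n)) (Dl (dmetric b) s t).
Proof. apply (Dl_cv (dmetric b) dmn dmr dms dmt). Qed.
Lemma Dl_rho_sq_dm s t : Cauchy (dmetric b) s -> Cauchy (dmetric b) t ->
  Dl (rho b c) s t * Dl (rho b c) s t <= Dl (dmetric b) s t.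
Proof. intros hs ht. apply (cv_le_cv (fun n => rho b c (s n) (t n) * rho b c (s n) (t n)) (fun n => dmetric b (s n) (t n))).
  apply CV_mult; apply Dlcv_rho; apply cauchy_d_rho; auto.
  apply Dlcv_dm; auto. intros; apply rho_sq_dm. Qed.
Lemma Dl_min_dm_rho s t : Cauchy (dmetric b) s -> Cauchy (dmetric b) t ->
  Rmin (Dl (dmetric b) s t) 1 <= Kc * Dl (rho b c) s t.
Proof. intros hs ht. apply (cv_le_cv (fun n => Rmin (dmetric b (s n) (t n)) 1) (fun n => Kc * rho b c (s n) (t n))).
  apply (cv_lip _ _ (fun a => Rmin a 1)). apply Dlcv_dm; auto. apply Rmin1_lip.
  apply (CV_mult (fun _ => Kc)); [apply cv_const|]. apply Dlcv_rho; apply cauchy_d_rho; auto.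
  intros; apply min_dm_rho. Qed.
End Energy.

Definition Cv (w : nat -> C) (L : C) := Un_cv (fun n => fst (w n)) (fst L) /\ Un_cv (fun n => snd (w n)) (snd L).
Definition Clim (w : nat -> C) : C := (lim_or_zero (fun n => fst (w n)), lim_or_zero (fun n => snd (w n))).
Lemma Cv_Clim w L : Cv w L -> Clim w = L.
Proof. intros [h1 h2]. unfold Clim. rewrite (lim_eq _ _ h1), (lim_eq _ _ h2). destruct L; auto. Qed.
Lemma Cv_add w v L M : Cv w L -> Cv v M -> Cv (fun n => Cadd (w n) (v n)) (Cadd L M).
Proof. intros [h1 h2] [h3 h4]; split; simpl; apply CV_plus; auto. Qed.
Lemma Cv_mul w v L M : Cv w L -> Cv v M -> Cv (fun n => Cmul (w n) (v n)) (Cmul L M).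
Proof. intros [h1 h2] [h3 h4]; split; simpl.
  - apply cv_minus; apply CV_mult; auto.
  - apply CV_plus; apply CV_mult; auto. Qed.
Lemma Cv_const z : Cv (fun _ => z) z.
Proof. split; apply cv_const. Qed.
Lemma Cv_conj w L : Cv w L -> Cv (fun n => Cconj (w n)) (Cconj L).
Proof. intros [h1 h2]; split; simpl; auto. apply cv_opp; auto. Qed.
Lemma Cv_ext w v L : (forall n, w n = v n) -> Cv w L -> Cv v L.
Proof. intros h [h1 h2]; split; [apply (cv_ext (fun n => fst (w n)))|apply (cv_ext (fun n => snd (w n)))]; auto;
  intros n; rewrite h; auto. Qed.
Lemma Cv_norm_le w L e : Cv w L -> 0 <= e -> (exists N, forall n, (N <= n)%nat -> Cnorm (w n) <= e) -> Cnorm L <= e.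
Proof. intros [h1 h2] he [N hN]. apply Cnorm_le_iff; auto.
  assert (hc: Un_cv (fun n => Cnorm2 (w n)) (Cnorm2 L)).
  { unfold Cnorm2. apply CV_plus; apply CV_mult; auto. }
  apply (cv_le_ev _ _ _ hc). exists N; intros n hn. apply Cnorm_ge_sq; auto. Qed.

Section Alg.
Context {X : Type}.
Variable b : X -> X -> R.
Variable c : X -> R.
Hypothesis b_nonneg : forall x y, 0 <= b x y.
Hypothesis b_sym : forall x y, b x y = b y x.
Hypothesis c_nonneg : forall x, 0 <= c x.
Hypothesis Hconn : Connected b.
Hypothesis Hb : Summable (invb b).
Hypothesis Hc : Summable c.

Let rho_nn := rho_nonneg b c b_nonneg b_sym c_nonneg Hconn Hb Hc.
Let rho_rf := rho_refl b c b_nonneg b_sym c_nonneg Hconn Hb Hc.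
Let rho_sy := rho_sym b c b_nonneg b_sym c_nonneg Hconn Hb Hc.
Let rho_tr := rho_tri b c b_nonneg b_sym c_nonneg Hconn Hb Hc.
Let Qnn := Qle_nonneg b c b_nonneg b_sym c_nonneg Hconn Hb Hc.
Let liprho := lip_rho b c b_nonneg b_sym c_nonneg Hconn Hb Hc.
Let hzQ := hz_Qle b c b_nonneg b_sym c_nonneg Hconn Hb Hc.
Let hzB := hz_bounded b c b_nonneg b_sym c_nonneg Hconn Hb Hc.

Definition UC (u : X -> C) := forall e, 0 < e -> exists d, 0 < d /\ forall x y, rho b c x y < d -> Cnorm (Csub (u x) (u y)) <= e.
Definition S0 (u : X -> C) := Bounded u /\ UC u.

Lemma Bounded_nonneg (u : X -> C) : Bounded u -> exists M, 0 <= M /\ forall x, Cnorm (u x) <= M.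
Proof. intros [M hM]. exists (Rmax M 0). split; [apply Rmax_r|]. intros x; specialize (hM x).
  pose proof (Rmax_l M 0); lra. Qed.

Lemma Csub_add a b' a' b2 : Csub (Cadd a b') (Cadd a' b2) = Cadd (Csub a a') (Csub b' b2).
Proof. destruct a, b', a', b2; unfold Csub, Cadd; simpl; f_equal; ring. Qed.
Lemma Csub_mul z a a' : Csub (Cmul z a) (Cmul z a') = Cmul z (Csub a a').
Proof. destruct z, a, a'; unfold Csub, Cmul; simpl; f_equal; ring. Qed.
Lemma Csub_mul2 a b' a' b2 : Csub (Cmul a b') (Cmul a' b2) = Cadd (Cmul a (Csub b' b2)) (Cmul (Csub a a') b2).
Proof. destruct a, b', a', b2; unfold Csub, Cmul, Cadd; simpl; f_equal; ring. Qed.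
Lemma Csub_conj a a' : Csub (Cconj a) (Cconj a') = Cconj (Csub a a').
Proof. destruct a, a'; unfold Csub, Cconj; simpl; f_equal; ring. Qed.

Lemma S0_cstar : CstarSub S0.
Proof. split; [|split; [|split; [|split; [|split; [|split]]]]].
  - intros u [h _]; auto.
  - split. exists 0; intros; unfold Cnorm, Cnorm2, C0; simpl. replace (0*0+0*0) with 0 by ring. rewrite sqrt_0; lra.
    intros e he; exists 1; split; [lra|]; intros; rewrite Cnorm_self; lra.
  - intros u v [[Mu hu] hu2] [[Mv hv] hv2]. split.
    + exists (Mu + Mv); intros x. pose proof (Cnorm_add (u x) (v x)). specialize (hu x); specialize (hv x). lra.
    + intros e he. destruct (hu2 (e/2)) as [d1 [hd1 h1]]; [lra|]. destruct (hv2 (e/2)) as [d2 [hd2 h2]]; [lra|].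
      exists (Rmin d1 d2); split; [apply Rmin_glb_lt; auto|]. intros x y hxy.
      rewrite Csub_add. pose proof (Cnorm_add (Csub (u x) (u y)) (Csub (v x) (v y))).
      assert (rho b c x y < d1) by (pose proof (Rmin_l d1 d2); lra).
      assert (rho b c x y < d2) by (pose proof (Rmin_r d1 d2); lra).
      specialize (h1 x y H0); specialize (h2 x y H1). lra.
  - intros z u [[Mu hu] hu2]. split.
    + exists (Cnorm z * Mu); intros x. rewrite Cnorm_mul. apply Rmult_le_compat_l; auto. apply Cnorm_nonneg.
    + intros e he. destruct (hu2 (e / (Cnorm z + 1))) as [d [hd h]]. apply Rdiv_lt_0_compat; auto.
      pose proof (Cnorm_nonneg z); lra.
      exists d; split; auto. intros x y hxy. rewrite Csub_mul, Cnorm_mul. specialize (h x y hxy).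
      pose proof (Cnorm_nonneg z). pose proof (Cnorm_nonneg (Csub (u x) (u y))).
      apply Rle_trans with ((Cnorm z + 1) * (e / (Cnorm z + 1))). apply Rmult_le_compat; lra.
      right; field; lra.
  - intros u v hu hv. destruct hu as [hu hu2], hv as [hv hv2].
    destruct (Bounded_nonneg u hu) as [Mu [hMu hu']]. destruct (Bounded_nonneg v hv) as [Mv [hMv hv']]. split.
    + exists (Mu * Mv); intros x. rewrite Cnorm_mul. apply Rmult_le_compat; auto; apply Cnorm_nonneg.
    + intros e he. set (K := Mu + Mv + 1).
      destruct (hu2 (e / (2 * K))) as [d1 [hd1 h1]]; [apply Rdiv_lt_0_compat; unfold K; lra|].
      destruct (hv2 (e / (2 * K))) as [d2 [hd2 h2]]; [apply Rdiv_lt_0_compat; unfold K; lra|].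
      exists (Rmin d1 d2); split; [apply Rmin_glb_lt; auto|]. intros x y hxy.
      assert (rho b c x y < d1) by (pose proof (Rmin_l d1 d2); lra).
      assert (rho b c x y < d2) by (pose proof (Rmin_r d1 d2); lra).
      specialize (h1 x y H); specialize (h2 x y H0).
      rewrite Csub_mul2. eapply Rle_trans; [apply Cnorm_add|]. rewrite !Cnorm_mul.
      pose proof (hu' x); pose proof (hv' y). pose proof (Cnorm_nonneg (Csub (v x) (v y))).
      pose proof (Cnorm_nonneg (Csub (u x) (u y))). pose proof (Cnorm_nonneg (u x)). pose proof (Cnorm_nonneg (v y)).
      apply Rle_trans with (K * (e / (2 * K)) + K * (e / (2 * K))).
      apply Rplus_le_compat; [apply Rmult_le_compat; unfold K in *; lra|].
      rewrite (Rmult_comm K). apply Rmult_le_compat; unfold K in *; lra.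
      right; field; unfold K; lra.
  - intros u [[Mu hu] hu2]. split.
    + exists Mu; intros x; rewrite Cnorm_conj; auto.
    + intros e he. destruct (hu2 e he) as [d [hd h]]. exists d; split; auto. intros x y hxy.
      rewrite Csub_conj, Cnorm_conj; auto.
  - intros u hu. destruct (hu 1 ltac:(lra)) as [v [[[Mv hv] _] hv2]]. split.
    + exists (Mv + 1). intros x. pose proof (Cnorm_le_add (u x) (v x)). specialize (hv x); specialize (hv2 x). lra.
    + intros e he. destruct (hu (e/3)) as [w [[_ hw] hw2]]; [lra|]. destruct (hw (e/3)) as [d [hd h]]; [lra|].
      exists d; split; auto. intros x y hxy. specialize (h x y hxy).
      pose proof (Cnorm_tri (u x) (w x) (u y)). pose proof (Cnorm_tri (w x) (w y) (u y)).
      pose proof (hw2 x) as h4; pose proof (hw2 y) as h5. rewrite Cnorm_sym in h5. lra. Qed.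

Lemma D_UC f M : Qle b c f M -> UC f.
Proof. intros hQ e he. pose proof (Qnn f M hQ).
  assert (hs: 0 < sqrt (M + 1)) by (apply sqrt_lt_R0; lra).
  exists (e / sqrt (M + 1)); split; [apply Rdiv_lt_0_compat; auto|]. intros x y hxy.
  pose proof (liprho f M x y hQ).
  apply (Rmult_lt_compat_l (sqrt (M+1))) in hxy; auto. replace (sqrt (M+1) * (e / sqrt (M+1))) with e in hxy by (field; lra).
  lra. Qed.

Lemma S0_A u : InA b c u -> S0 u.
Proof. intros hu. destruct S0_cstar as [_ [_ [_ [_ [_ [_ hcl]]]]]]. apply hcl. intros e he.
  destruct (hu e he) as [f [[M hM] [hb hf]]]. exists f; split; auto. split; auto. apply (D_UC f M hM). Qed.

Lemma Aplus_S0 u : InAplus b c u -> S0 u.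
Proof. intros h. apply h. apply S0_cstar. apply S0_A.
  split. exists 1; intros; unfold Cnorm, Cnorm2, C1; simpl. replace (1*1+0*0) with 1 by ring. rewrite sqrt_1; lra.
  intros e he; exists 1; split; [lra|]; intros; rewrite Cnorm_self; lra. Qed.

Lemma Aplus_cstar : CstarSub (InAplus b c).
Proof. split; [|split; [|split; [|split; [|split; [|split]]]]].
  - intros u hu. apply (Aplus_S0 u hu).
  - intros S hS hA h1. apply (proj1 (proj2 hS)).
  - intros u v hu hv S hS hA h1. destruct hS as [hB [h0 [hadd [hsc [hmul [hcj hcl]]]]]].
    apply hadd; [apply hu|apply hv]; repeat split; auto.
  - intros z u hu S hS hA h1. destruct hS as [hB [h0 [hadd [hsc [hmul [hcj hcl]]]]]].
    apply hsc; apply hu; repeat split; auto.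
  - intros u v hu hv S hS hA h1. destruct hS as [hB [h0 [hadd [hsc [hmul [hcj hcl]]]]]].
    apply hmul; [apply hu|apply hv]; repeat split; auto.
  - intros u hu S hS hA h1. destruct hS as [hB [h0 [hadd [hsc [hmul [hcj hcl]]]]]].
    apply hcj; apply hu; repeat split; auto.
  - intros u hu S hS hA h1. destruct hS as [hB [h0 [hadd [hsc [hmul [hcj hcl]]]]]].
    apply hcl. intros e he. destruct (hu e he) as [v [hv hv2]].
    exists v; split; auto. apply hv; repeat split; auto. Qed.

Lemma Aplus_add u v : InAplus b c u -> InAplus b c v -> InAplus b c (fun x => Cadd (u x) (v x)).
Proof. destruct Aplus_cstar as [hB [h0 [hadd [hsc [hmul [hcj hcl]]]]]]. apply hadd. Qed.
Lemma Aplus_scal z u : InAplus b c u -> InAplus b c (fun x => Cmul z (u x)).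
Proof. destruct Aplus_cstar as [hB [h0 [hadd [hsc [hmul [hcj hcl]]]]]]. apply hsc. Qed.
Lemma Aplus_mul u v : InAplus b c u -> InAplus b c v -> InAplus b c (fun x => Cmul (u x) (v x)).
Proof. destruct Aplus_cstar as [hB [h0 [hadd [hsc [hmul [hcj hcl]]]]]]. apply hmul. Qed.
Lemma Aplus_conj u : InAplus b c u -> InAplus b c (fun x => Cconj (u x)).
Proof. destruct Aplus_cstar as [hB [h0 [hadd [hsc [hmul [hcj hcl]]]]]]. apply hcj. Qed.
Lemma Aplus_closed u : (forall e, 0 < e -> exists v, InAplus b c v /\ forall x, Cnorm (Csub (u x) (v x)) <= e) -> InAplus b c u.
Proof. destruct Aplus_cstar as [hB [h0 [hadd [hsc [hmul [hcj hcl]]]]]]. apply hcl. Qed.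
Lemma Aplus_one : InAplus b c (fun _ => C1).
Proof. intros S hS hA h1; auto. Qed.
Lemma Aplus_zero : InAplus b c (fun _ => C0).
Proof. destruct Aplus_cstar as [hB [h0 [hadd [hsc [hmul [hcj hcl]]]]]]. apply h0. Qed.
Lemma Aplus_A u : InA b c u -> InAplus b c u.
Proof. intros h S hS hA h1; auto. Qed.
Lemma hz_Aplus z : InAplus b c (hz b z).
Proof. apply Aplus_A. intros e he. exists (hz b z). split. exists (Mh b c). apply hzQ.
  split. apply hzB. intros; rewrite Cnorm_self; lra. Qed.

Definition ext (u : X -> C) (s : nat -> X) : C := Clim (fun n => u (s n)).

Lemma S0_cv u s : S0 u -> Cauchy (rho b c) s -> Cv (fun n => u (s n)) (ext u s).
Proof. intros [_ hu] hs.
  assert (h: forall (p : C -> R), (forall z, Rabs (p z) <= Cnorm z) -> (forall z w, p (Csub z w) = p z - p w) ->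
     Un_cv (fun n => p (u (s n))) (lim_or_zero (fun n => p (u (s n))))).
  { intros p hp hp2. assert (Cauchy_crit (fun n => p (u (s n)))).
    { intros e he. destruct (hu (e/2)) as [d [hd hd2]]; [lra|]. destruct (hs d hd) as [N hN].
      exists N; intros n m hn hm. unfold R_dist. rewrite <- hp2. pose proof (hp (Csub (u (s n)) (u (s m)))).
      pose proof (hd2 _ _ (hN n m hn hm)). lra. }
    destruct (R_complete _ H) as [l hl]. rewrite (lim_eq _ _ hl); auto. }
  split; simpl; apply h; try (intros; apply Cnorm_fst); try (intros; apply Cnorm_snd);
    intros [] []; reflexivity. Qed.

Lemma ext_eq u s L : Cv (fun n => u (s n)) L -> ext u s = L.
Proof. apply Cv_Clim. Qed.

Lemma ext_pt u (s : nat -> X) x : (forall n, s n = x) -> ext u s = u x.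
Proof. intros h. apply ext_eq. apply (Cv_ext (fun _ => u x)); [intros; rewrite h; auto|apply Cv_const]. Qed.

Lemma ext_cont u : S0 u -> forall e, 0 < e -> exists d, 0 < d /\ forall s t, Cauchy (rho b c) s -> Cauchy (rho b c) t ->
  Dl (rho b c) s t < d -> Cnorm (Csub (ext u s) (ext u t)) <= e.
Proof. intros hu e he. destruct hu as [hB hU]. destruct (hU e he) as [d [hd h]]. exists d; split; auto.
  intros s t hs ht hst. destruct (Dl_lt_ev (rho b c) rho_nn rho_rf rho_sy rho_tr s t d hs ht hst) as [N hN].
  apply (Cv_norm_le (fun n => Csub (u (s n)) (u (t n)))); [|lra|].
  - pose proof (S0_cv u s (conj hB hU) hs). pose proof (S0_cv u t (conj hB hU) ht).
    destruct H as [h1 h2], H0 as [h3 h4]. split; simpl; apply cv_minus; auto.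
  - exists N; intros n hn. apply h; auto. Qed.

Definition phi_of (s : nat -> X) : (X -> C) -> C := fun u => ext u s.

Lemma phi_char (s : Compl (rho b c)) : IsCharacter b c (phi_of (proj1_sig s)).
Proof. pose proof (proj2_sig s) as hs. simpl in hs. unfold phi_of. split; [|split; [|split]].
  - intros u v hu hv. apply ext_eq. apply Cv_add; apply S0_cv; auto; apply Aplus_S0; auto.
  - intros z u hu. apply ext_eq. apply Cv_mul. apply Cv_const. apply S0_cv; auto; apply Aplus_S0; auto.
  - intros u v hu hv. apply ext_eq. apply Cv_mul; apply S0_cv; auto; apply Aplus_S0; auto.
  - exists (fun _ => C1). split. apply Aplus_one. rewrite (ext_eq (fun _ => C1) _ C1 (Cv_const C1)).
    unfold C1, C0; intros h; inversion h; lra. Qed.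

Definition Phi (s : Compl (rho b c)) : Kspace b c := exist _ (phi_of (proj1_sig s)) (phi_char s).

(* ---------- Gelfand: every character is a point evaluation ---------- *)
Lemma rho_tb (x0 : X) : forall e, 0 < e -> exists F : list X, forall x, exists y, In y F /\ rho b c x y < e.
Proof. intros e he. destruct (dm_tb b b_nonneg b_sym Hconn Hb x0 (e * e)) as [F hF]; [nra|].
  exists F; intros x. destruct (hF x) as [y [hy hd]]. exists y; split; auto.
  pose proof (rho_sq_dm b c b_nonneg b_sym c_nonneg Hconn Hb Hc x y). pose proof (rho_nn x y).
  destruct (Rlt_le_dec (rho b c x y) e); auto. nra. Qed.

Lemma rho_compact (x0 : X) : Compact (copen (rho b c)).
Proof. apply (compl_compact (rho b c) rho_nn rho_rf rho_sy rho_tr x0 (rho_tb x0)). Qed.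

Lemma Csub_fst a b' : fst (Csub a b') = fst a - fst b'.
Proof. reflexivity. Qed.
Definition Cneg (z : C) : C := (- fst z, - snd z).
Lemma Ccancel a z : a <> C0 -> a = Cmul a z -> z = C1.
Proof. destruct a as [a1 a2], z as [z1 z2]; unfold Cmul, C0, C1; simpl. intros hn h. injection h as h1 h2.
  assert (hpos: 0 < a1 * a1 + a2 * a2).
  { pose proof (sq_nonneg a1). pose proof (sq_nonneg a2). destruct (Req_dec a1 0) as [e1|n1].
    - destruct (Req_dec a2 0) as [e2|n2]. exfalso; apply hn; subst; auto.
      assert (0 < a2 * a2) by (apply Rsqr_pos_lt; auto). lra.
    - assert (0 < a1 * a1) by (apply Rsqr_pos_lt; auto). lra. }
  assert (k1: a1*z1 - a2*z2 - a1 = 0) by lra. assert (k2: a1*z2 + a2*z1 - a2 = 0) by lra.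
  assert (e1: (a1 * a1 + a2 * a2) * (z1 - 1) = a1 * (a1*z1 - a2*z2 - a1) + a2 * (a1*z2 + a2*z1 - a2)) by ring.
  assert (e2: (a1 * a1 + a2 * a2) * z2 = a1 * (a1*z2 + a2*z1 - a2) - a2 * (a1*z1 - a2*z2 - a1)) by ring.
  rewrite k1, k2 in e1, e2. rewrite Rmult_0_r, Rmult_0_r, Rplus_0_r in e1. rewrite Rmult_0_r, Rmult_0_r, Rminus_0_r in e2.
  apply Rmult_integral in e1; apply Rmult_integral in e2. f_equal; lra. Qed.

Section Char.
Variable phi : (X -> C) -> C.
Hypothesis hphi : IsCharacter b c phi.

Lemma phi_add u v : InAplus b c u -> InAplus b c v -> phi (fun x => Cadd (u x) (v x)) = Cadd (phi u) (phi v).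
Proof. apply hphi. Qed.
Lemma phi_scal z u : InAplus b c u -> phi (fun x => Cmul z (u x)) = Cmul z (phi u).
Proof. apply hphi. Qed.
Lemma phi_mul u v : InAplus b c u -> InAplus b c v -> phi (fun x => Cmul (u x) (v x)) = Cmul (phi u) (phi v).
Proof. apply hphi. Qed.

Lemma phi_one : phi (fun _ => C1) = C1.
Proof. destruct hphi as [_ [_ [_ [w [hw hw0]]]]].
  pose proof (phi_mul w (fun _ => C1) hw Aplus_one).
  assert (e: (fun x => Cmul (w x) C1) = w).
  { apply functional_extensionality; intros x. destruct (w x); unfold Cmul, C1; simpl; f_equal; ring. }
  cbv beta in H. rewrite e in H. apply (Ccancel (phi w)); auto. Qed.

Lemma phi_zero : phi (fun _ => C0) = C0.
Proof. assert (e: (fun _ : X => C0) = (fun x => Cmul C0 ((fun _ => C1) x))).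
  { apply functional_extensionality; intros; unfold Cmul, C0, C1; simpl; f_equal; ring. }
  rewrite e, phi_scal by apply Aplus_one. unfold Cmul, C0; simpl; f_equal; ring. Qed.

Definition wu (u : X -> C) : X -> C := fun x => Cadd (u x) (Cmul (Cneg (phi u)) C1).
Definition sq (u : X -> C) : X -> C := fun x => Cmul (Cconj (wu u x)) (wu u x).

Lemma wu_A u : InAplus b c u -> InAplus b c (wu u).
Proof. intros h. apply Aplus_add; auto. apply (Aplus_scal (Cneg (phi u)) (fun _ => C1)). apply Aplus_one. Qed.
Lemma sq_A u : InAplus b c u -> InAplus b c (sq u).
Proof. intros h. unfold sq. apply Aplus_mul. apply (Aplus_conj (wu u)). apply wu_A; auto. apply wu_A; auto. Qed.
Lemma phi_wu u : InAplus b c u -> phi (wu u) = C0.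
Proof. intros h. unfold wu. rewrite phi_add; auto. rewrite (phi_scal (Cneg (phi u)) (fun _ => C1)) by apply Aplus_one.
  rewrite phi_one. destruct (phi u); unfold Cadd, Cmul, Cneg, C1, C0; simpl; f_equal; ring.
  apply (Aplus_scal (Cneg (phi u)) (fun _ => C1)). apply Aplus_one. Qed.
Lemma phi_sq u : InAplus b c u -> phi (sq u) = C0.
Proof. intros h. unfold sq. rewrite (phi_mul (fun x => Cconj (wu u x)) (wu u)).
  rewrite phi_wu; auto. destruct (phi (fun x => Cconj (wu u x))); unfold Cmul, C0; simpl; f_equal; ring.
  apply (Aplus_conj (wu u)); apply wu_A; auto. apply wu_A; auto. Qed.
Lemma sq_val u x : sq u x = (Cnorm2 (Csub (u x) (phi u)), 0).
Proof. unfold sq, wu. destruct (u x), (phi u); unfold Cmul, Cconj, Cadd, Cneg, C1, Cnorm2, Csub; simpl; f_equal; ring. Qed.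

Lemma sq_ext u (s : nat -> X) : InAplus b c u -> Cauchy (rho b c) s ->
  ext (sq u) s = (Cnorm2 (Csub (ext u s) (phi u)), 0).
Proof. intros h hs. apply ext_eq. apply (Cv_ext (fun n => (Cnorm2 (Csub (u (s n)) (phi u)), 0))).
  intros; rewrite sq_val; auto.
  destruct (S0_cv u s (Aplus_S0 u h) hs) as [h1 h2]. split; simpl; [|apply cv_const].
  unfold Cnorm2; simpl. apply CV_plus; apply CV_mult; apply cv_minus; auto; apply cv_const. Qed.

Definition valid (i : (X -> C) * R) : Prop := InAplus b c (fst i) /\ 0 < snd i.
Definition term (i : (X -> C) * R) : X -> C :=
  match excluded_middle_informative (valid i) with left _ => sq (fst i) | right _ => fun _ => C0 end.
Fixpoint vsum (l : list ((X -> C) * R)) : X -> C :=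
  match l with nil => fun _ => C0 | i :: l' => fun x => Cadd (term i x) (vsum l' x) end.
Fixpoint dl (l : list ((X -> C) * R)) : R :=
  match l with nil => 1 | i :: l' => Rmin (match excluded_middle_informative (valid i) with left _ => snd i | right _ => 1 end) (dl l') end.

Lemma term_A i : InAplus b c (term i).
Proof. unfold term; destruct excluded_middle_informative as [[h1 h2]|h]; [apply sq_A; auto|apply Aplus_zero]. Qed.
Lemma term_phi i : phi (term i) = C0.
Proof. unfold term; destruct excluded_middle_informative as [[h1 h2]|h]; [apply phi_sq; auto|apply phi_zero]. Qed.
Lemma term_val i x : snd (term i x) = 0 /\ 0 <= fst (term i x).
Proof. unfold term; destruct excluded_middle_informative as [[h1 h2]|h].
  - rewrite sq_val; simpl; split; auto; apply Cnorm2_nonneg.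
  - unfold C0; simpl; lra. Qed.
Lemma vsum_A l : InAplus b c (vsum l).
Proof. induction l; simpl; [apply Aplus_zero|]. apply Aplus_add; auto; apply term_A. Qed.
Lemma vsum_phi l : phi (vsum l) = C0.
Proof. induction l; simpl; [apply phi_zero|]. rewrite phi_add; [|apply term_A|apply vsum_A].
  rewrite term_phi, IHl. unfold Cadd, C0; simpl; f_equal; ring. Qed.
Lemma vsum_val l x : snd (vsum l x) = 0 /\ 0 <= fst (vsum l x).
Proof. induction l; simpl; [unfold C0; simpl; lra|]. destruct (term_val a x). destruct IHl; split; lra. Qed.
Lemma vsum_ge l i x : In i l -> fst (term i x) <= fst (vsum l x).
Proof. induction l; simpl; [tauto|]. intros [->|h].
  - destruct (vsum_val l x); lra.
  - destruct (term_val a x). specialize (IHl h); lra. Qed.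
Lemma dl_pos l : 0 < dl l.
Proof. induction l; simpl; [lra|]. apply Rmin_glb_lt; auto. destruct excluded_middle_informative as [[h1 h2]|h]; lra. Qed.
Lemma dl_le l i : In i l -> valid i -> dl l <= snd i.
Proof. induction l; simpl; [tauto|]. intros [->|h] hv.
  - destruct excluded_middle_informative; [apply Rmin_l|contradiction].
  - apply Rle_trans with (dl l); [apply Rmin_r|auto]. Qed.

(* the inverse of a function bounded below, via a geometric series *)
Section Inv.
Variable v : X -> C.
Variable dd MM : R.
Hypothesis hvA : InAplus b c v.
Hypothesis hv_snd : forall x, snd (v x) = 0.
Hypothesis hv_lb : forall x, dd <= fst (v x).
Hypothesis hv_ub : forall x, fst (v x) <= MM.
Hypothesis hdd : 0 < dd.
Hypothesis hdM : dd <= MM.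

Fixpoint gK (K : nat) : X -> C :=
  match K with O => fun _ => C0
  | S K => fun x => Cadd (Cmul (/ MM, 0) C1) (Cmul (Cadd C1 (Cmul (- / MM, 0) (v x))) (gK K x)) end.
Lemma gK_A K : InAplus b c (gK K).
Proof. induction K; simpl; [apply Aplus_zero|]. apply Aplus_add.
  apply (Aplus_scal (/ MM, 0) (fun _ => C1)), Aplus_one.
  apply (Aplus_mul (fun x => Cadd C1 (Cmul (- / MM, 0) (v x))) (gK K)); auto.
  apply (Aplus_add (fun _ => C1) (fun x => Cmul (- / MM, 0) (v x))). apply Aplus_one. apply Aplus_scal; auto. Qed.
Lemma gK_val K x : snd (gK K x) = 0 /\ Rabs (/ fst (v x) - fst (gK K x)) <= / dd * (1 - dd / MM) ^ K.
Proof. pose proof (hv_snd x). pose proof (hv_lb x). pose proof (hv_ub x).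
  assert (hM: 0 < MM) by lra. set (V := fst (v x)) in *.
  induction K; simpl.
  - unfold C0; simpl. split; auto. replace (/ V - 0) with (/ V) by ring. rewrite Rabs_right.
    rewrite Rmult_1_r. apply Rinv_le_contravar; lra. apply Rle_ge; left; apply Rinv_0_lt_compat; lra.
  - destruct IHK as [h1 h2]. destruct (gK K x) as [a a2]. simpl in h1, h2 |- *. subst a2.
    destruct (v x) as [v1 v2]. simpl in H, V. subst v2. unfold V in *; clear V.
    simpl. split; [ring|].
    match goal with |- Rabs ?t <= _ => replace t with ((1 - v1 / MM) * (/ v1 - a)) by (field; lra) end.
    assert (hvm: v1 / MM <= 1). { apply (Rmult_le_reg_r MM); auto. field_simplify; lra. }
    assert (hdv: dd / MM <= v1 / MM). { unfold Rdiv; apply Rmult_le_compat_r; [left; apply Rinv_0_lt_compat|]; lra. }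
    rewrite Rabs_mult. rewrite (Rabs_right (1 - v1 / MM)) by lra.
    replace (/ dd * ((1 - dd / MM) * (1 - dd / MM) ^ K)) with ((1 - dd / MM) * (/ dd * (1 - dd / MM) ^ K)) by ring.
    apply Rmult_le_compat; try lra. apply Rabs_pos. Qed.

Lemma inv_A : InAplus b c (fun x => (/ fst (v x), 0)).
Proof. apply Aplus_closed. intros e he.
  assert (hM: 0 < MM) by lra.
  set (r := 1 - dd / MM).
  assert (hr: 0 <= r < 1). { unfold r; split. cut (dd / MM <= 1); [lra|]. apply (Rmult_le_reg_r MM); auto. field_simplify; lra.
    cut (0 < dd / MM); [lra|]. apply Rdiv_lt_0_compat; auto. }
  destruct (pow_lt_1_zero r ltac:(rewrite Rabs_right; lra) (e * dd) ltac:(nra)) as [K hK].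
  specialize (hK K (le_n K)). rewrite Rabs_right in hK by (apply Rle_ge, pow_le; lra).
  exists (gK K); split; [apply gK_A|]. intros x. destruct (gK_val K x) as [h1 h2].
  destruct (gK K x) as [a a2]; simpl in h1, h2. subst a2. unfold Csub; simpl.
  replace (0 - 0) with 0 by ring. rewrite Cnorm_real. fold r in h2.
  apply Rle_trans with (1 := h2). apply (Rmult_le_reg_l dd); auto.
  replace (dd * (/ dd * r ^ K)) with (r ^ K) by (field; lra). nra. Qed.
End Inv.

Lemma gelfand_point (x0 : X) : exists p : Compl (rho b c), forall u, InAplus b c u -> phi u = ext u (proj1_sig p).
Proof. apply NNPP; intros hno.
  assert (hno2: forall p : Compl (rho b c), exists u, InAplus b c u /\ phi u <> ext u (proj1_sig p)).
  { intros p. apply NNPP; intros h. apply hno. exists p. intros u hu. apply NNPP; intros h2. apply h. exists u; auto. }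
  set (U := fun (i : (X -> C) * R) (t : Compl (rho b c)) => valid i /\ snd i < fst (ext (sq (fst i)) (proj1_sig t))).
  assert (hU : forall i, copen (rho b c) (U i)).
  { intros i t [[hA hr] hlt]. set (g := fst (ext (sq (fst i)) (proj1_sig t)) - snd i).
    destruct (ext_cont (sq (fst i)) (Aplus_S0 _ (sq_A _ hA)) (g / 2)) as [d [hd hd2]]; [unfold g; lra|].
    exists d; split; auto. intros t' ht'. split; [split; auto|].
    pose proof (hd2 (proj1_sig t) (proj1_sig t') (proj2_sig t) (proj2_sig t') ht').
    pose proof (Cnorm_fst (Csub (ext (sq (fst i)) (proj1_sig t)) (ext (sq (fst i)) (proj1_sig t')))).
    rewrite Csub_fst in H0. unfold Rabs in H0; destruct Rcase_abs in H0; unfold g in *; lra. }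
  assert (hcov : forall t, exists i, U i t).
  { intros t. destruct (hno2 t) as [u [hu hne]].
    set (q := Cnorm2 (Csub (ext u (proj1_sig t)) (phi u))).
    assert (hq: 0 < q). { destruct (Cnorm2_nonneg (Csub (ext u (proj1_sig t)) (phi u))) as [h|h]; auto.
      exfalso. apply hne. symmetry. apply Cnorm_zero_eq. unfold Cnorm; unfold q in *. rewrite <- h. apply sqrt_0. }
    exists (u, q / 2). split; [split; [exact hu| simpl; lra]|].
    change (q / 2 < fst (ext (sq u) (proj1_sig t))).
    rewrite sq_ext; auto; [change (q / 2 < q); lra|apply (proj2_sig t)]. }
  destruct (rho_compact x0 _ U hU hcov) as [l hl].
  set (v := vsum l). set (dd := dl l).
  assert (hv_lb : forall x, dd <= fst (v x)).
  { intros x. destruct (hl (pt (rho b c) rho_nn rho_rf rho_sy rho_tr x)) as [i [hi [[hA hr] hlt]]].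
    change (proj1_sig (pt (rho b c) rho_nn rho_rf rho_sy rho_tr x)) with (fun _ : nat => x) in hlt. rewrite (ext_pt _ _ x) in hlt by auto.
    pose proof (vsum_ge l i x hi). unfold term in H. destruct excluded_middle_informative as [_|hn]; [|exfalso; apply hn; split; auto].
    pose proof (dl_le l i hi (conj hA hr)). unfold v, dd. lra. }
  destruct (Bounded_nonneg v (proj1 Aplus_cstar v (vsum_A l))) as [M [hM0 hM]].
  assert (hv_ub : forall x, fst (v x) <= M + dd).
  { intros x. pose proof (Cnorm_fst (v x)). pose proof (hM x). pose proof (Rle_abs (fst (v x))).
    pose proof (dl_pos l). unfold dd in *; lra. }
  assert (hv_snd : forall x, snd (v x) = 0) by (intros; apply vsum_val).
  pose proof (inv_A v dd (M + dd) (vsum_A l) hv_snd hv_lb hv_ub (dl_pos l) ltac:(lra)) as hinv.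
  assert (e: (fun x => Cmul (v x) (/ fst (v x), 0)) = (fun _ => C1)).
  { apply functional_extensionality; intros x. specialize (hv_lb x); specialize (hv_snd x). pose proof (dl_pos l).
    destruct (v x) as [v1 v2]; simpl in *; subst v2. unfold Cmul, C1; simpl; f_equal; field; unfold dd in *; lra. }
  pose proof (phi_mul v _ (vsum_A l) hinv). cbv beta in H. rewrite e, phi_one in H. unfold v in H. rewrite vsum_phi in H.
  unfold Cmul, C0, C1 in H; simpl in H. injection H as h1 h2. lra. Qed.
End Char.

End Alg.

Section Main.
Context {X : Type}.
Variable b : X -> X -> R.
Variable c : X -> R.
Hypothesis b_nonneg : forall x y, 0 <= b x y.
Hypothesis b_sym : forall x y, b x y = b y x.
Hypothesis c_nonneg : forall x, 0 <= c x.
Hypothesis Hconn : Connected b.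
Hypothesis Hb : Summable (invb b).
Hypothesis Hc : Summable c.
Variable x0 : X.

Let rnn := rho_nonneg b c b_nonneg b_sym c_nonneg Hconn Hb Hc.
Let rrf := rho_refl b c b_nonneg b_sym c_nonneg Hconn Hb Hc.
Let rsy := rho_sym b c b_nonneg b_sym c_nonneg Hconn Hb Hc.
Let rtr := rho_tri b c b_nonneg b_sym c_nonneg Hconn Hb Hc.
Let dmn := dm_nonneg b b_nonneg b_sym Hconn.
Let dmr := dm_refl b b_nonneg b_sym Hconn.
Let dms := dm_sym b b_nonneg b_sym Hconn.
Let dmt := dm_tri b b_nonneg b_sym Hconn.
Let ptd := pt (dmetric b) dmn dmr dms dmt.
Let ptr := pt (rho b c) rnn rrf rsy rtr.
Let cdr := cauchy_d_rho b c b_nonneg b_sym c_nonneg Hconn Hb Hc.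
Let crd := cauchy_rho_d b c b_nonneg b_sym c_nonneg Hconn Hb Hc.

Definition iota (s : Compl (dmetric b)) : Compl (rho b c) := exist _ (proj1_sig s) (cdr _ (proj2_sig s)).
Definition jinv (s : Compl (rho b c)) : Compl (dmetric b) := exist _ (proj1_sig s) (crd _ (proj2_sig s)).

Lemma iota_cont : Continuous (copen (dmetric b)) (copen (rho b c)) iota.
Proof. intros V hV s hs. destruct (hV _ hs) as [e [he h]]. exists (e * e); split; [nra|].
  intros t ht. apply h. change (Dl (rho b c) (proj1_sig s) (proj1_sig t) < e).
  change (Dl (dmetric b) (proj1_sig s) (proj1_sig t) < e * e) in ht.
  pose proof (Dl_rho_sq_dm b c b_nonneg b_sym c_nonneg Hconn Hb Hc (proj1_sig s) (proj1_sig t) (proj2_sig s) (proj2_sig t)).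
  pose proof (Dl_nonneg (rho b c) rnn rrf rsy rtr (proj1_sig s) (proj1_sig t) (cdr _ (proj2_sig s)) (cdr _ (proj2_sig t))).
  set (D := Dl (rho b c) (proj1_sig s) (proj1_sig t)) in *.
  destruct (Rlt_le_dec D e); auto. assert (e * e <= D * D) by (apply Rmult_le_compat; lra). lra. Qed.

Lemma jinv_cont : Continuous (copen (rho b c)) (copen (dmetric b)) jinv.
Proof. intros V hV s hs. destruct (hV _ hs) as [e [he h]]. pose proof (Kc_pos b c b_nonneg b_sym c_nonneg Hconn Hb Hc).
  set (e' := Rmin e 1). assert (0 < e') by (unfold e', Rmin; destruct Rle_dec; lra).
  exists (e' / Kc b c); split; [apply Rdiv_lt_0_compat; auto|].
  intros t ht. apply h. change (Dl (dmetric b) (proj1_sig s) (proj1_sig t) < e).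
  change (Dl (rho b c) (proj1_sig s) (proj1_sig t) < e' / Kc b c) in ht.
  pose proof (Dl_min_dm_rho b c b_nonneg b_sym c_nonneg Hconn Hb Hc (proj1_sig s) (proj1_sig t) (crd _ (proj2_sig s)) (crd _ (proj2_sig t))).
  assert (Kc b c * Dl (rho b c) (proj1_sig s) (proj1_sig t) < e').
  { apply (Rmult_lt_compat_l (Kc b c)) in ht; auto. replace (Kc b c * (e' / Kc b c)) with e' in ht by (field; lra). auto. }
  unfold e', Rmin in *. repeat destruct Rle_dec; lra. Qed.

Lemma iota_points : forall x s t, IsPointOf _ s x -> IsPointOf _ t x -> ceq (rho b c) (iota s) t.
Proof. intros x s t h1 h2. unfold ceq, cdist; simpl. apply (Dl_self (rho b c) rnn rrf rsy rtr). intros n; rewrite h1, h2; auto. Qed.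

Lemma iota_unique : forall g : Compl (dmetric b) -> Compl (rho b c),
  Continuous (copen (dmetric b)) (copen (rho b c)) g ->
  (forall x s t, IsPointOf _ s x -> IsPointOf _ t x -> ceq _ (g s) t) ->
  forall s, ceq _ (g s) (iota s).
Proof. intros g hg hp s. unfold ceq. apply Rsmall_eq0; [apply (cd_nonneg (rho b c) rnn rrf rsy rtr)|].
  intros e he.
  destruct (hg _ (ball_open (rho b c) rnn rrf rsy rtr (g s) (e/2)) s) as [d [hd h]].
  rewrite (cd_self (rho b c) rnn rrf rsy rtr); lra.
  destruct (cd_density (dmetric b) dmn dmr dms dmt s (d/2)) as [N1 hN1]; [lra|].
  destruct (cd_density (rho b c) rnn rrf rsy rtr (iota s) (e/2)) as [N2 hN2]; [lra|].
  set (n := max N1 N2). specialize (hN1 n ltac:(lia)). specialize (hN2 n ltac:(lia)).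
  set (xn := proj1_sig s n) in *.
  specialize (h (ptd xn) ltac:(unfold ptd; lra)). simpl in h.
  pose proof (hp xn (ptd xn) (ptr xn) (fun _ => eq_refl) (fun _ => eq_refl)). unfold ceq in H.
  pose proof (cd_tri (rho b c) rnn rrf rsy rtr (g s) (g (ptd xn)) (ptr xn)).
  pose proof (cd_tri (rho b c) rnn rrf rsy rtr (g s) (ptr xn) (iota s)).
  rewrite (cd_sym (rho b c) rnn rrf rsy rtr (ptr xn) (iota s)) in H1.
  change (cdist (rho b c) (iota s) (ptr xn) <= e/2) in hN2. lra. Qed.

Lemma iota_homeo : Homeo (ceq (dmetric b)) (ceq (rho b c)) (copen (dmetric b)) (copen (rho b c)) iota.
Proof. split; [apply iota_cont|]. exists jinv. split; [apply jinv_cont|]. split.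
  - intros a. unfold ceq, cdist; simpl. apply (Dl_self (dmetric b) dmn dmr dms dmt); auto.
  - intros a. unfold ceq, cdist; simpl. apply (Dl_self (rho b c) rnn rrf rsy rtr); auto. Qed.

Let Phi' := Phi b c b_nonneg b_sym c_nonneg Hconn Hb Hc.
Let extc := ext_cont b c b_nonneg b_sym c_nonneg Hconn Hb Hc.
Let AS0 := Aplus_S0 b c b_nonneg b_sym c_nonneg Hconn Hb Hc.
Let extpt := ext_pt b c b_nonneg b_sym c_nonneg Hconn Hb Hc.
Let exteq := ext_eq b c b_nonneg b_sym c_nonneg Hconn Hb Hc.
Let hzA := hz_Aplus b c b_nonneg b_sym c_nonneg Hconn Hb Hc.
Let Dcvd := Dlcv_dm b c b_nonneg b_sym c_nonneg Hconn Hb Hc.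
Let ccd := const_cauchy (dmetric b) dmn dmr dms dmt.
Let DlsqD := Dl_rho_sq_dm b c b_nonneg b_sym c_nonneg Hconn Hb Hc.

Lemma Kopen_ball (u : X -> C) (w : C) e : InAplus b c u -> Kopen b c (fun q => Cnorm (Csub (proj1_sig q u) w) < e).
Proof. intros hu p hp. exists (u :: nil), (e - Cnorm (Csub (proj1_sig p u) w)). split; [lra|].
  split; [intros a [<-|[]]; auto|]. intros q hq. specialize (hq u (or_introl eq_refl)).
  pose proof (Cnorm_tri (proj1_sig q u) (proj1_sig p u) w). lra. Qed.

Lemma common_delta l : (forall a, In a l -> InAplus b c a) -> forall e, 0 < e -> exists d, 0 < d /\
  forall s t, Cauchy (rho b c) s -> Cauchy (rho b c) t -> Dl (rho b c) s t < d ->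
  forall a, In a l -> Cnorm (Csub (ext a s) (ext a t)) <= e.
Proof. induction l as [|a l IH]; intros hl e he.
  - exists 1; split; [lra|]. intros s t _ _ _ a [].
  - destruct (IH (fun a h => hl a (or_intror h)) e he) as [d1 [hd1 h1]].
    destruct (extc a (AS0 a (hl a (or_introl eq_refl))) e he) as [d2 [hd2 h2]].
    exists (Rmin d1 d2); split; [apply Rmin_glb_lt; auto|]. intros s t hs ht hst a' [<-|ha'].
    + apply h2; auto. pose proof (Rmin_r d1 d2); lra.
    + apply h1; auto. pose proof (Rmin_l d1 d2); lra. Qed.

Lemma Phi_cont : Continuous (copen (rho b c)) (Kopen b c) Phi'.
Proof. intros U hU s hs. destruct (hU _ hs) as [l [e [he [hl h]]]].
  destruct (common_delta l hl (e/2)) as [d [hd hd2]]; [lra|]. exists d; split; auto.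
  intros t ht. apply h. intros a ha.
  change (Cnorm (Csub (ext a (proj1_sig t)) (ext a (proj1_sig s))) < e).
  rewrite Cnorm_sym. pose proof (hd2 (proj1_sig s) (proj1_sig t) (proj2_sig s) (proj2_sig t) ht a ha). lra. Qed.

Lemma Phi_points : forall x s, IsPointOf _ s x -> forall u, InAplus b c u -> proj1_sig (Phi' s) u = u x.
Proof. intros x s hs u hu. change (ext u (proj1_sig s) = u x). apply extpt; auto. Qed.

Lemma Phi_unique : forall g : Compl (rho b c) -> Kspace b c,
  Continuous (copen (rho b c)) (Kopen b c) g ->
  (forall x s, IsPointOf _ s x -> forall u, InAplus b c u -> proj1_sig (g s) u = u x) ->
  forall s, Keq b c (g s) (Phi' s).
Proof. intros g hg hp s u hu. change (proj1_sig (g s) u = ext u (proj1_sig s)).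
  apply Cnorm_small_eq. intros e he.
  destruct (hg _ (Kopen_ball u (proj1_sig (g s) u) (e/2) hu) s) as [d1 [hd1 h1]].
  rewrite Cnorm_self; lra.
  destruct (extc u (AS0 u hu) (e/2)) as [d2 [hd2 h2]]; [lra|].
  destruct (cd_density (rho b c) rnn rrf rsy rtr s (Rmin d1 d2 / 2)) as [N hN].
  apply Rdiv_lt_0_compat; [apply Rmin_glb_lt; auto|lra].
  specialize (hN N (le_n N)). set (xn := proj1_sig s N) in *.
  pose proof (Rmin_l d1 d2). pose proof (Rmin_r d1 d2).
  pose proof (Rmin_glb_lt d1 d2 0 hd1 hd2).
  specialize (h1 (ptr xn) ltac:(unfold ptr; lra)). simpl in h1.
  rewrite (hp xn (ptr xn) (fun _ => eq_refl) u hu) in h1.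
  assert (hc : Cauchy (rho b c) (fun _ => xn)) by apply (proj2_sig (ptr xn)).
  specialize (h2 (proj1_sig s) (fun _ => xn) (proj2_sig s) hc ltac:(change (cdist (rho b c) s (ptr xn) < d2); unfold ptr; lra)).
  rewrite (extpt u (fun _ => xn) xn) in h2 by auto.
  pose proof (Cnorm_tri (proj1_sig (g s) u) (u xn) (ext u (proj1_sig s))).
  rewrite Cnorm_sym in h1. rewrite (Cnorm_sym (ext u _)) in h2. lra. Qed.

Definition Gm (phi : Kspace b c) : Compl (rho b c) :=
  proj1_sig (constructive_indefinite_description _
    (gelfand_point b c b_nonneg b_sym c_nonneg Hconn Hb Hc (proj1_sig phi) (proj2_sig phi) x0)).
Lemma Gm_spec phi : forall u, InAplus b c u -> proj1_sig phi u = ext u (proj1_sig (Gm phi)).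
Proof. unfold Gm. destruct constructive_indefinite_description; simpl; auto. Qed.

Lemma ext_hz z (s : nat -> X) : Cauchy (rho b c) s -> ext (hz b z) s = (Rmin (Dl (dmetric b) s (fun _ => z)) 1, 0).
Proof. intros hs. apply exteq. split; simpl.
  - apply (cv_lip _ _ (fun a => Rmin a 1)); [|apply Rmin1_lip]. apply Dcvd; [apply crd; exact hs| apply ccd].
  - apply cv_const. Qed.

Lemma Gm_Phi a : ceq (rho b c) (Gm (Phi' a)) a.
Proof. set (p := Gm (Phi' a)).
  assert (hs : forall u, InAplus b c u -> ext u (proj1_sig a) = ext u (proj1_sig p)) by (intros u hu; apply (Gm_spec (Phi' a) u hu)).
  assert (hpd := crd _ (proj2_sig p)). assert (had := crd _ (proj2_sig a)).
  assert (hz_eq : forall z, Rmin (Dl (dmetric b) (proj1_sig a) (fun _ => z)) 1 = Rmin (Dl (dmetric b) (proj1_sig p) (fun _ => z)) 1).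
  { intros z. pose proof (hs _ (hzA z)). rewrite !ext_hz in H by apply proj2_sig. injection H; auto. }
  assert (hD : Dl (dmetric b) (proj1_sig p) (proj1_sig a) = 0).
  { apply Rsmall_eq0. apply (Dl_nonneg (dmetric b) dmn dmr dms dmt); auto.
    intros e0 he0. set (e := Rmin (e0/2) (1/2)). assert (0 < e) by (unfold e, Rmin; destruct Rle_dec; lra).
    assert (e <= e0 / 2) by apply Rmin_l. assert (e <= 1/2) by apply Rmin_r.
    destruct (Dl_density (dmetric b) dmn dmr dms dmt (proj1_sig a) had e H) as [N hN].
    specialize (hN N (le_n N)). set (z := proj1_sig a N) in *.
    pose proof (hz_eq z). pose proof (Dl_nonneg (dmetric b) dmn dmr dms dmt _ _ had (ccd z)).
    pose proof (Dl_nonneg (dmetric b) dmn dmr dms dmt _ _ hpd (ccd z)).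
    assert (Dl (dmetric b) (proj1_sig p) (fun _ => z) <= e).
    { revert H2. unfold Rmin; repeat destruct Rle_dec; lra. }
    pose proof (Dl_tri (dmetric b) dmn dmr dms dmt (proj1_sig p) (fun _ => z) (proj1_sig a) hpd (ccd z) had) as htri.
    rewrite (Dl_sym (dmetric b) dmn dmr dms dmt (fun _ => z) (proj1_sig a) (ccd z) had) in htri. lra. }
  unfold ceq, cdist. change (Dl (rho b c) (proj1_sig p) (proj1_sig a) = 0).
  pose proof (DlsqD _ _ hpd had). rewrite hD in H.
  pose proof (Dl_nonneg (rho b c) rnn rrf rsy rtr _ _ (proj2_sig p) (proj2_sig a)). nra. Qed.

Lemma Gm_cont : Continuous (Kopen b c) (copen (rho b c)) Gm.
Proof. intros V hV p hp. set (P := Gm p) in *. destruct (hV P hp) as [e [he h]].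
  set (eta := Rmin (e * e / 3) (1/4)).
  assert (heta : 0 < eta) by (unfold eta, Rmin; destruct Rle_dec; nra).
  assert (eta <= e * e / 3) by apply Rmin_l. assert (eta <= 1/4) by apply Rmin_r.
  assert (hPd := crd _ (proj2_sig P)).
  destruct (Dl_density (dmetric b) dmn dmr dms dmt (proj1_sig P) hPd eta heta) as [N hN].
  specialize (hN N (le_n N)). set (z := proj1_sig P N) in *.
  exists (hz b z :: nil), eta. split; auto. split; [intros a [<-|[]]; apply hzA|].
  intros q hq. specialize (hq (hz b z) (or_introl eq_refl)).
  rewrite (Gm_spec q _ (hzA z)), (Gm_spec p _ (hzA z)) in hq. fold P in hq.
  set (Q := Gm q) in *. assert (hQd := crd _ (proj2_sig Q)).
  rewrite !ext_hz in hq by apply proj2_sig. unfold Csub in hq; simpl in hq.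
  replace (0 - 0) with 0 in hq by ring. rewrite Cnorm_real in hq.
  pose proof (Dl_nonneg (dmetric b) dmn dmr dms dmt _ _ hPd (ccd z)).
  pose proof (Dl_nonneg (dmetric b) dmn dmr dms dmt _ _ hQd (ccd z)).
  assert (hQz : Dl (dmetric b) (proj1_sig Q) (fun _ => z) < 2 * eta).
  { revert hq. unfold Rmin; repeat destruct Rle_dec; unfold Rabs; destruct Rcase_abs; lra. }
  pose proof (Dl_tri (dmetric b) dmn dmr dms dmt (proj1_sig P) (fun _ => z) (proj1_sig Q) hPd (ccd z) hQd) as htri.
  rewrite (Dl_sym (dmetric b) dmn dmr dms dmt (fun _ => z) (proj1_sig Q) (ccd z) hQd) in htri.
  pose proof (DlsqD _ _ hPd hQd).
  pose proof (Dl_nonneg (rho b c) rnn rrf rsy rtr _ _ (proj2_sig P) (proj2_sig Q)).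
  apply h. change (Dl (rho b c) (proj1_sig P) (proj1_sig Q) < e).
  set (D := Dl (rho b c) (proj1_sig P) (proj1_sig Q)) in *.
  destruct (Rlt_le_dec D e); auto. assert (e * e <= D * D) by (apply Rmult_le_compat; lra). lra. Qed.

Lemma Phi_homeo : Homeo (ceq (rho b c)) (Keq b c) (copen (rho b c)) (Kopen b c) Phi'.
Proof. split; [apply Phi_cont|]. exists Gm. split; [apply Gm_cont|]. split.
  - apply Gm_Phi.
  - intros phi u hu. change (ext u (proj1_sig (Gm phi)) = proj1_sig phi u). rewrite Gm_spec; auto. Qed.

End Main.

Theorem mainTheorem20 (X : Type) (b : X -> X -> R) (c : X -> R)
  (HX : CountablyInfinite X) (Hg : WeightedGraph b c) (Hconn : Connected b)
  (Hc : Summable c) (Hb : Summable (invb b)) :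
  CanonicallyCompactifiable b c /\
  Compact (copen (dmetric b)) /\
  Compact (copen (rho b c)) /\
  (exists iota : Compl (dmetric b) -> Compl (rho b c),
     Continuous (copen (dmetric b)) (copen (rho b c)) iota /\
     (forall x s t, IsPointOf _ s x -> IsPointOf _ t x -> ceq _ (iota s) t) /\
     (forall g : Compl (dmetric b) -> Compl (rho b c),
        Continuous (copen (dmetric b)) (copen (rho b c)) g ->
        (forall x s t, IsPointOf _ s x -> IsPointOf _ t x -> ceq _ (g s) t) ->
        forall s, ceq _ (g s) (iota s)) /\
     Homeo (ceq (dmetric b)) (ceq (rho b c)) (copen (dmetric b)) (copen (rho b c)) iota) /\
  (exists Phi : Compl (rho b c) -> Kspace b c,
     Continuous (copen (rho b c)) (Kopen b c) Phi /\
     (forall x s, IsPointOf _ s x -> forall u, InAplus b c u -> proj1_sig (Phi s) u = u x) /\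
     (forall g : Compl (rho b c) -> Kspace b c,
        Continuous (copen (rho b c)) (Kopen b c) g ->
        (forall x s, IsPointOf _ s x -> forall u, InAplus b c u -> proj1_sig (g s) u = u x) ->
        forall s, Keq b c (g s) (Phi s)) /\
     Homeo (ceq (rho b c)) (Keq b c) (copen (rho b c)) (Kopen b c) Phi).
Proof.
  destruct HX as [en _]. pose (x0 := en 0%nat).
  destruct Hg as [bn [bs [_ [_ cn]]]].
  split; [exact (canon b c bn bs cn Hconn Hb Hc x0)|].
  split; [exact (compl_compact (dmetric b) (dm_nonneg b bn bs Hconn) (dm_refl b bn bs Hconn)
            (dm_sym b bn bs Hconn) (dm_tri b bn bs Hconn) x0 (dm_tb b bn bs Hconn Hb x0))|].
  split; [exact (rho_compact b c bn bs cn Hconn Hb Hc x0)|].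
  split.
  - exists (iota b c bn bs cn Hconn Hb Hc). split; [exact (iota_cont b c bn bs cn Hconn Hb Hc x0)|].
    split; [exact (iota_points b c bn bs cn Hconn Hb Hc x0)|].
    split; [exact (iota_unique b c bn bs cn Hconn Hb Hc x0)|].
    exact (iota_homeo b c bn bs cn Hconn Hb Hc x0).
  - exists (Phi b c bn bs cn Hconn Hb Hc). split; [exact (Phi_cont b c bn bs cn Hconn Hb Hc x0)|].
    split; [exact (Phi_points b c bn bs cn Hconn Hb Hc x0)|].
    split; [exact (Phi_unique b c bn bs cn Hconn Hb Hc x0)|].
    exact (Phi_homeo b c bn bs cn Hconn Hb Hc x0).
Qed.
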